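(* Let $L^\bullet_{\mathrm{cl}}$ be a classical generalized operator algebra and $\mathfrak A$ a complex $\cdots\to H(g^j)\xrightarrow{A_j}H(g^{j+1})\to\cdots$ with $A_j\in L^0_{\mathrm{cl}}((g^j,g^{j+1}))$, $j\in\mathbb Z$. The following are equivalent: (a) $\mathfrak A$ is elliptic; (b) all Laplacians $\Delta_j=A_{j-1}A_{j-1}^*+A_j^*A_j$, $j\in\mathbb Z$, are elliptic. These properties imply (c) $\mathfrak A$ has a parametrix in $L^\bullet_{\mathrm{cl}}$ (operators $B_j\in L^0_{\mathrm{cl}}((g^{j+1},g^j))$ with $A_{j-1}B_{j-1}+B_jA_j-1$ smoothing for all $j$) and (d) $\mathfrak A$ is a Fredholm complex. If $L^\bullet_{\mathrm{cl}}$ has the Fredholm property, (a)–(d) are all equivalent; if it has the extended Fredholm property, the parametrix in (c) can be chosen to be a complex ($B_jB_{j+1}=0$).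
   Context: Generalized operator algebra $L^\bullet$: a set $G$ of weights; to each $g\in G$ a Hilbert space $H(g)$; for each pair $(g^0,g^1)$ vector spaces $L^{-\infty}\subset L^0\subset\mathcal L(H(g^0),H(g^1))$ with compact smoothing operators, identities in $L^0((g,g))$, closed under composition (orders adding in $\{0,-\infty\}$) and Hilbert adjoints. Classical: there is a principal symbol map $A\mapsto\sigma(A)=(\sigma_1(A),\dots,\sigma_n(A))$ assigning to $A\in L^0_{\mathrm{cl}}((g^0,g^1))$ Hilbert bundle morphisms $\sigma_\ell(A):E_\ell(g^0)\to E_\ell(g^1)$ (for fixed $\ell$ all bundles $E_\ell(g)$ have the same base) which is linear, multiplicative under composition, satisfies $\sigma_\ell(A^* )=\sigma_\ell(A)^*$ (fibrewise adjoint), vanishes on smoothing operators, and such that $A$ is elliptic (all $\sigma_\ell(A)$ isomorphisms) iff $A$ has a parametrix in $L^0_{\mathrm{cl}}$ (inverse modulo smoothing operators). A complex $\mathfrak A$ is elliptic if for each $\ell$ the family of complexes $\cdots\to E_\ell(g^j)\xrightarrow{\sigma_\ell(A_j)}E_\ell(g^{j+1})\to\cdots$ is exact in every fibre. Fredholm property: every $A\in L^0$ has a parametrix iff it is Fredholm. Extended Fredholm property: Fredholm property plus: every selfadjoint Fredholm $A\in L^0((g,g))$ has a parametrix $B$ with $AB=BA=1-\pi$, $\pi$ the orthogonal projection onto $\ker A$. A Fredholm complex has finite-dimensional cohomology. *)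

(* Defs.v *)
From Stdlib Require Import Reals ZArith List.
Import ListNotations.
Set Implicit Arguments.
Open Scope R_scope.

Record C := mkC { Cre : R; Cim : R }.
Definition C0 : C := mkC 0 0.
Definition C1 : C := mkC 1 0.
Definition Cadd (a b : C) : C := mkC (Cre a + Cre b) (Cim a + Cim b).
Definition Cmul (a b : C) : C :=
  mkC (Cre a * Cre b - Cim a * Cim b) (Cre a * Cim b + Cim a * Cre b).
Definition Cconj (a : C) : C := mkC (Cre a) (- Cim a).

(* ---------- complex Hilbert spaces ----------
   inner product linear in the first, conjugate linear in the second argument *)
Record Hilbert := {
  hcar :> Type;
  hzero : hcar;
  hadd : hcar -> hcar -> hcar;
  hopp : hcar -> hcar;
  hscal : C -> hcar -> hcar;
  hinner : hcar -> hcar -> C;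
  hadd_assoc : forall x y z, hadd x (hadd y z) = hadd (hadd x y) z;
  hadd_comm : forall x y, hadd x y = hadd y x;
  hadd_0 : forall x, hadd hzero x = x;
  hadd_opp : forall x, hadd x (hopp x) = hzero;
  hscal_assoc : forall a b x, hscal a (hscal b x) = hscal (Cmul a b) x;
  hscal_1 : forall x, hscal C1 x = x;
  hscal_addr : forall a x y, hscal a (hadd x y) = hadd (hscal a x) (hscal a y);
  hscal_addl : forall a b x, hscal (Cadd a b) x = hadd (hscal a x) (hscal b x);
  hinner_conj : forall x y, hinner y x = Cconj (hinner x y);
  hinner_add : forall x y z, hinner (hadd x y) z = Cadd (hinner x z) (hinner y z);
  hinner_scal : forall a x y, hinner (hscal a x) y = Cmul a (hinner x y);
  hinner_pos : forall x, Cim (hinner x x) = 0 /\ 0 <= Cre (hinner x x);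
  hinner_def : forall x, Cre (hinner x x) = 0 -> x = hzero;
  hcomplete : forall u : nat -> hcar,
    (forall eps, 0 < eps -> exists N, forall m k, (N <= m)%nat -> (N <= k)%nat ->
       sqrt (Cre (hinner (hadd (u m) (hopp (u k))) (hadd (u m) (hopp (u k))))) < eps) ->
    exists l, forall eps, 0 < eps -> exists N, forall m, (N <= m)%nat ->
       sqrt (Cre (hinner (hadd (u m) (hopp l)) (hadd (u m) (hopp l)))) < eps
}.

Arguments hzero {h}.
Arguments hadd {h}.
Arguments hopp {h}.
Arguments hscal {h}.
Arguments hinner {h}.

Definition hnorm {X : Hilbert} (x : X) : R := sqrt (Cre (hinner x x)).
Definition hdist {X : Hilbert} (x y : X) : R := hnorm (hadd x (hopp y)).

Definition converges {X : Hilbert} (u : nat -> X) (l : X) : Prop :=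
  forall eps, 0 < eps -> exists N, forall m, (N <= m)%nat -> hdist (u m) l < eps.

Definition bounded_linear {X Y : Hilbert} (f : X -> Y) : Prop :=
  (forall x y, f (hadd x y) = hadd (f x) (f y)) /\
  (forall c x, f (hscal c x) = hscal c (f x)) /\
  (exists M, forall x, hnorm (f x) <= M * hnorm x).

Definition compact_op {X Y : Hilbert} (f : X -> Y) : Prop :=
  bounded_linear f /\
  forall u : nat -> X, (exists M, forall m, hnorm (u m) <= M) ->
    exists phi : nat -> nat, (forall m, (phi m < phi (S m))%nat) /\
      exists l, converges (fun m => f (u (phi m))) l.

Definition is_adjoint {X Y : Hilbert} (f : X -> Y) (f' : Y -> X) : Prop :=
  forall x y, hinner (f x) y = hinner x (f' y).

Definition bijective_map {X Y : Type} (f : X -> Y) : Prop :=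
  (forall u v, f u = f v -> u = v) /\ (forall w, exists u, f u = w).

Definition oid {X : Hilbert} : X -> X := fun x => x.
Definition ozero {X Y : Hilbert} : X -> Y := fun _ => hzero.
Definition oadd {X Y : Hilbert} (f g : X -> Y) : X -> Y := fun x => hadd (f x) (g x).
Definition osub {X Y : Hilbert} (f g : X -> Y) : X -> Y := fun x => hadd (f x) (hopp (g x)).
Definition oscal {X Y : Hilbert} (c : C) (f : X -> Y) : X -> Y := fun x => hscal c (f x).
Definition ocomp {X Y Z : Hilbert} (g : Y -> Z) (f : X -> Y) : X -> Z := fun x => g (f x).

Fixpoint lincomb {X : Hilbert} (cs : list C) (vs : list X) : X :=
  match cs, vs with
  | c :: cs', v :: vs' => hadd (hscal c v) (lincomb cs' vs')
  | _, _ => hzero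
  end.

(* Fredholm operator: finite-dimensional kernel and cokernel
   (closedness of the range is then automatic for bounded operators). *)
Definition fredholm_op {X Y : Hilbert} (f : X -> Y) : Prop :=
  bounded_linear f /\
  (exists vs : list X, forall u, f u = hzero -> exists cs, u = lincomb cs vs) /\
  (exists ws : list Y, forall y, exists x cs, y = hadd (f x) (lincomb cs ws)).

(* ---------- classical generalized operator algebra ----------
   L0 = L^0_cl, Linf = L^{-infty}; the principal symbol has components
   sigma_l, l < nsym; E l g is a Hilbert bundle over sbase l, given by its
   fibres sE l g x. *)
Unset Implicit Arguments.
Record ClGOA := {
  gw : Type;
  H : gw -> Hilbert;
  L0 : forall g0 g1 : gw, (H g0 -> H g1) -> Prop;
  Linf : forall g0 g1 : gw, (H g0 -> H g1) -> Prop;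
  Linf_L0 : forall g0 g1 (A : H g0 -> H g1), Linf g0 g1 A -> L0 g0 g1 A;
  L0_bl : forall g0 g1 (A : H g0 -> H g1), L0 g0 g1 A -> bounded_linear A;
  Linf_compact : forall g0 g1 (A : H g0 -> H g1), Linf g0 g1 A -> compact_op A;
  L0_zero : forall g0 g1, L0 g0 g1 ozero;
  L0_add : forall g0 g1 (A B : H g0 -> H g1), L0 g0 g1 A -> L0 g0 g1 B -> L0 g0 g1 (oadd A B);
  L0_scal : forall g0 g1 c (A : H g0 -> H g1), L0 g0 g1 A -> L0 g0 g1 (oscal c A);
  Linf_zero : forall g0 g1, Linf g0 g1 ozero;
  Linf_add : forall g0 g1 (A B : H g0 -> H g1), Linf g0 g1 A -> Linf g0 g1 B -> Linf g0 g1 (oadd A B);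
  Linf_scal : forall g0 g1 c (A : H g0 -> H g1), Linf g0 g1 A -> Linf g0 g1 (oscal c A);
  L0_id : forall g, L0 g g oid;
  L0_comp : forall g0 g1 g2 (A : H g0 -> H g1) (B : H g1 -> H g2),
      L0 g0 g1 A -> L0 g1 g2 B -> L0 g0 g2 (ocomp B A);
  Linf_comp_l : forall g0 g1 g2 (A : H g0 -> H g1) (B : H g1 -> H g2),
      Linf g0 g1 A -> L0 g1 g2 B -> Linf g0 g2 (ocomp B A);
  Linf_comp_r : forall g0 g1 g2 (A : H g0 -> H g1) (B : H g1 -> H g2),
      L0 g0 g1 A -> Linf g1 g2 B -> Linf g0 g2 (ocomp B A);
  adj : forall g0 g1 : gw, (H g0 -> H g1) -> (H g1 -> H g0);
  adj_spec : forall g0 g1 (A : H g0 -> H g1), L0 g0 g1 A -> is_adjoint A (adj g0 g1 A);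
  L0_adj : forall g0 g1 (A : H g0 -> H g1), L0 g0 g1 A -> L0 g1 g0 (adj g0 g1 A);
  Linf_adj : forall g0 g1 (A : H g0 -> H g1), Linf g0 g1 A -> Linf g1 g0 (adj g0 g1 A);
  nsym : nat;
  sbase : nat -> Type;
  sE : forall l : nat, gw -> sbase l -> Hilbert;
  sigma : forall (l : nat) (g0 g1 : gw), (H g0 -> H g1) ->
            forall x : sbase l, sE l g0 x -> sE l g1 x;
  sigma_bl : forall l g0 g1 (A : H g0 -> H g1) x, (l < nsym)%nat ->
      L0 g0 g1 A -> bounded_linear (sigma l g0 g1 A x);
  sigma_add : forall l g0 g1 (A B : H g0 -> H g1) x, (l < nsym)%nat ->
      L0 g0 g1 A -> L0 g0 g1 B ->
      sigma l g0 g1 (oadd A B) x = oadd (sigma l g0 g1 A x) (sigma l g0 g1 B x);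
  sigma_scal : forall l g0 g1 c (A : H g0 -> H g1) x, (l < nsym)%nat ->
      L0 g0 g1 A -> sigma l g0 g1 (oscal c A) x = oscal c (sigma l g0 g1 A x);
  sigma_comp : forall l g0 g1 g2 (A : H g0 -> H g1) (B : H g1 -> H g2) x, (l < nsym)%nat ->
      L0 g0 g1 A -> L0 g1 g2 B ->
      sigma l g0 g2 (ocomp B A) x = ocomp (sigma l g1 g2 B x) (sigma l g0 g1 A x);
  sigma_adj : forall l g0 g1 (A : H g0 -> H g1) x, (l < nsym)%nat ->
      L0 g0 g1 A -> is_adjoint (sigma l g0 g1 A x) (sigma l g1 g0 (adj g0 g1 A) x);
  sigma_smooth : forall l g0 g1 (A : H g0 -> H g1) x, (l < nsym)%nat ->
      Linf g0 g1 A -> sigma l g0 g1 A x = ozero;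
  sigma_elliptic : forall g0 g1 (A : H g0 -> H g1), L0 g0 g1 A ->
      ((forall l, (l < nsym)%nat -> forall x, bijective_map (sigma l g0 g1 A x)) <->
       exists B : H g1 -> H g0, L0 g1 g0 B /\
         Linf g0 g0 (osub (ocomp B A) oid) /\ Linf g1 g1 (osub (ocomp A B) oid))
}.

Set Implicit Arguments.
Arguments L0 _ {g0 g1}.
Arguments Linf _ {g0 g1}.
Arguments adj _ {g0 g1}.
Arguments sigma _ _ {g0 g1}.

Section Notions.
Variable O : ClGOA.

Definition elliptic_op {g0 g1 : gw O} (A : H O g0 -> H O g1) : Prop :=
  forall l, (l < nsym O)%nat -> forall x, bijective_map (sigma O l A x).

Definition has_parametrix {g0 g1 : gw O} (A : H O g0 -> H O g1) : Prop :=
  exists B : H O g1 -> H O g0, L0 O B /\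
    Linf O (osub (ocomp B A) oid) /\ Linf O (osub (ocomp A B) oid).

Definition fredholm_property : Prop :=
  forall (g0 g1 : gw O) (A : H O g0 -> H O g1), L0 O A ->
    (has_parametrix A <-> fredholm_op A).

Definition orth_proj_ker {g0 g1 : gw O} (A : H O g0 -> H O g1) (P : H O g0 -> H O g0) : Prop :=
  forall x, A (P x) = hzero /\
    forall y, A y = hzero -> hinner (hadd x (hopp (P x))) y = C0.

Definition ext_fredholm_property : Prop :=
  fredholm_property /\
  forall (g : gw O) (A : H O g -> H O g), L0 O A -> is_adjoint A A -> fredholm_op A ->
    exists (B P : H O g -> H O g), L0 O B /\ orth_proj_ker A P /\
      ocomp B A = osub oid P /\ ocomp A B = osub oid P.

Variable g : Z -> gw O.

Definition trH {i k : Z} (e : i = k) (v : H O (g i)) : H O (g k) :=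
  eq_rect i (fun m => hcar (H O (g m))) v k e.

Variable A : forall j : Z, H O (g j) -> H O (g (Z.succ j)).

(* A_{j-1} : H(g^{j-1}) -> H(g^j), identifying g^{(j-1)+1} with g^j *)
Definition Aprev (j : Z) : H O (g (Z.pred j)) -> H O (g j) :=
  fun v => trH (Z.succ_pred j) (A (Z.pred j) v).

Definition is_complex : Prop :=
  forall j v, A j (Aprev j v) = hzero.

Definition Laplacian (j : Z) : H O (g j) -> H O (g j) :=
  oadd (ocomp (Aprev j) (adj O (Aprev j))) (ocomp (adj O (A j)) (A j)).

Definition elliptic_complex : Prop :=
  forall l, (l < nsym O)%nat -> forall (x : sbase O l) (j : Z) (v : sE O l (g j) x),
    sigma O l (A j) x v = hzero <-> exists w, sigma O l (Aprev j) x w = v.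

Definition Bnext (B : forall j : Z, H O (g (Z.succ j)) -> H O (g j)) (j : Z)
  : H O (g j) -> H O (g (Z.pred j)) :=
  fun v => B (Z.pred j) (trH (eq_sym (Z.succ_pred j)) v).

Definition cx_parametrix (B : forall j : Z, H O (g (Z.succ j)) -> H O (g j)) : Prop :=
  forall j, L0 O (B j) /\
    Linf O (osub (oadd (ocomp (Aprev j) (Bnext B j)) (ocomp (B j) (A j))) oid).

(* finite-dimensional cohomology ker A_j / im A_{j-1} at every j *)
Definition fredholm_complex : Prop :=
  forall j, exists vs : list (H O (g j)),
    forall u, A j u = hzero -> exists cs w, u = hadd (lincomb cs vs) (Aprev j w).

End Notions.

(* Main.v *)
Require Import Defs.
From Stdlib Require Import Reals ZArith List.
From Stdlib Require Import Lra Psatz Classical ClassicalEpsilon FunctionalExtensionality Eqdep_dec.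
Import Defs.
Import ListNotations.
Open Scope R_scope.

Import ListNotations.
Import Defs.
Open Scope R_scope.
Arguments hadd_assoc {h}.
Arguments hadd_comm {h}.
Arguments hadd_0 {h}.
Arguments hadd_opp {h}.
Arguments hscal_assoc {h}.
Arguments hscal_1 {h}.
Arguments hscal_addr {h}.
Arguments hscal_addl {h}.
Arguments hinner_conj {h}.
Arguments hinner_add {h}.
Arguments hinner_scal {h}.
Arguments hinner_pos {h}.
Arguments hinner_def {h}.
Arguments hcomplete {h}.

Lemma Ceq (a b : C) : Cre a = Cre b -> Cim a = Cim b -> a = b.
Proof. destruct a, b; simpl; intros; subst; reflexivity. Qed.

Definition Copp (a : C) : C := mkC (- Cre a) (- Cim a).
Definition RC (t : R) : C := mkC t 0.
Definition Ci : C := mkC 0 1.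

Section HB.
Context {X : Hilbert}.
Implicit Types x y z u v w : X.

Definition hsub x y : X := hadd x (hopp y).
Definition nsq x : R := Cre (hinner x x).
Definition rinner x y : R := Cre (hinner x y).

Lemma hadd_0r x : hadd x hzero = x.
Proof. rewrite hadd_comm; apply hadd_0. Qed.

Lemma hadd_opp_l x : hadd (hopp x) x = hzero.
Proof. rewrite hadd_comm; apply hadd_opp. Qed.

Lemma hadd_cancel_l x y z : hadd x y = hadd x z -> y = z.
Proof.
  intro E. assert (E2 : hadd (hopp x) (hadd x y) = hadd (hopp x) (hadd x z)) by now rewrite E.
  rewrite !hadd_assoc, hadd_opp_l, !hadd_0 in E2. exact E2.
Qed.

Lemma hadd_self_0 x : hadd x x = x -> x = hzero.
Proof. intro E. apply (hadd_cancel_l x). rewrite E, hadd_0r. reflexivity. Qed.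

Lemma hscal_0l x : hscal C0 x = hzero.
Proof.
  apply hadd_self_0. rewrite <- hscal_addl. f_equal. apply Ceq; simpl; ring.
Qed.

Lemma hscal_0r a : hscal a (@hzero X) = hzero.
Proof.
  apply hadd_self_0. rewrite <- hscal_addr, hadd_0. reflexivity.
Qed.

Lemma hopp_scal x : hopp x = hscal (RC (-1)) x.
Proof.
  apply (hadd_cancel_l x). rewrite hadd_opp.
  rewrite <- (hscal_1 x) at 1. rewrite <- hscal_addl.
  rewrite <- (hscal_0l x). f_equal. apply Ceq; unfold RC, C1; simpl; ring.
Qed.

Lemma hsub_diag x : hsub x x = hzero.
Proof. apply hadd_opp. Qed.

Lemma hopp_0 : hopp (@hzero X) = hzero.
Proof. rewrite hopp_scal. apply hscal_0r. Qed.

Lemma hopp_add x y : hopp (hadd x y) = hadd (hopp x) (hopp y).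
Proof. rewrite !hopp_scal. apply hscal_addr. Qed.

Lemma hopp_opp x : hopp (hopp x) = x.
Proof. rewrite !hopp_scal, hscal_assoc. rewrite <- (hscal_1 x) at 2. f_equal.
  apply Ceq; unfold RC, C1; simpl; ring. Qed.

Lemma hopp_hscal a x : hopp (hscal a x) = hscal a (hopp x).
Proof. rewrite !hopp_scal, !hscal_assoc. f_equal. apply Ceq; unfold RC; simpl; ring. Qed.

Lemma hsub_eq0 x y : hsub x y = hzero -> x = y.
Proof.
  unfold hsub; intro E. assert (E2: hadd (hadd x (hopp y)) y = hadd hzero y) by now rewrite E.
  rewrite <- hadd_assoc, hadd_opp_l, hadd_0r, hadd_0 in E2. exact E2.
Qed.

Lemma hsub_0r x : hsub x hzero = x.
Proof. unfold hsub. rewrite hopp_0. apply hadd_0r. Qed.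

Lemma hscal_sub a x y : hscal a (hsub x y) = hsub (hscal a x) (hscal a y).
Proof. unfold hsub. rewrite hscal_addr, hopp_hscal. reflexivity. Qed.

Lemma hinner_addr x y z : hinner x (hadd y z) = Cadd (hinner x y) (hinner x z).
Proof.
  rewrite hinner_conj, hinner_add, (hinner_conj y x), (hinner_conj z x).
  apply Ceq; simpl; ring.
Qed.

Lemma hinner_scalr a x y : hinner x (hscal a y) = Cmul (hinner x y) (Cconj a).
Proof.
  rewrite hinner_conj, hinner_scal, (hinner_conj y x). apply Ceq; simpl; ring.
Qed.

Lemma hinner_0l y : hinner hzero y = C0.
Proof. rewrite <- (hscal_0l hzero), hinner_scal. apply Ceq; simpl; ring. Qed.

Lemma hinner_0r y : hinner y hzero = C0.
Proof. rewrite hinner_conj, hinner_0l. apply Ceq; simpl; ring. Qed.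

Lemma hinner_oppl x y : hinner (hopp x) y = Copp (hinner x y).
Proof. rewrite hopp_scal, hinner_scal. apply Ceq; simpl; ring. Qed.

Lemma hinner_oppr x y : hinner x (hopp y) = Copp (hinner x y).
Proof. rewrite hopp_scal, hinner_scalr. apply Ceq; simpl; ring. Qed.

Lemma rinner_sym x y : rinner x y = rinner y x.
Proof. unfold rinner. rewrite (hinner_conj x y). reflexivity. Qed.

Lemma rinner_addl x y z : rinner (hadd x y) z = rinner x z + rinner y z.
Proof. unfold rinner. rewrite hinner_add. reflexivity. Qed.

Lemma rinner_addr x y z : rinner x (hadd y z) = rinner x y + rinner x z.
Proof. unfold rinner. rewrite hinner_addr. reflexivity. Qed.

Lemma rinner_oppl x y : rinner (hopp x) y = - rinner x y.
Proof. unfold rinner. rewrite hinner_oppl. reflexivity. Qed.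

Lemma rinner_oppr x y : rinner x (hopp y) = - rinner x y.
Proof. unfold rinner. rewrite hinner_oppr. reflexivity. Qed.

Lemma rinner_subl x y z : rinner (hsub x y) z = rinner x z - rinner y z.
Proof. unfold hsub. rewrite rinner_addl, rinner_oppl. ring. Qed.

Lemma rinner_subr x y z : rinner x (hsub y z) = rinner x y - rinner x z.
Proof. unfold hsub. rewrite rinner_addr, rinner_oppr. ring. Qed.

Lemma rinner_scall t x y : rinner (hscal (RC t) x) y = t * rinner x y.
Proof. unfold rinner. rewrite hinner_scal. simpl. ring. Qed.

Lemma rinner_scalr t x y : rinner x (hscal (RC t) y) = t * rinner x y.
Proof. unfold rinner. rewrite hinner_scalr. simpl. ring. Qed.

Lemma rinner_0l y : rinner hzero y = 0.
Proof. unfold rinner. rewrite hinner_0l. reflexivity. Qed.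

Lemma rinner_0r y : rinner y hzero = 0.
Proof. unfold rinner. rewrite hinner_0r. reflexivity. Qed.

Lemma rinner_Ci x y : rinner x (hscal Ci y) = Cim (hinner x y).
Proof. unfold rinner. rewrite hinner_scalr. simpl. ring. Qed.

Lemma hinner_from_r x y : rinner x y = 0 -> rinner x (hscal Ci y) = 0 -> hinner x y = C0.
Proof. rewrite rinner_Ci. unfold rinner. intros. apply Ceq; simpl; auto. Qed.

Lemma nsq_nonneg x : 0 <= nsq x.
Proof. apply hinner_pos. Qed.

Lemma nsq_rinner x : nsq x = rinner x x.
Proof. reflexivity. Qed.

Lemma nsq_0 x : nsq x = 0 -> x = hzero.
Proof. apply hinner_def. Qed.

Lemma nsq_zero : nsq (@hzero X) = 0.
Proof. unfold nsq. rewrite hinner_0l. reflexivity. Qed.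

Lemma nsq_add x y : nsq (hadd x y) = nsq x + nsq y + 2 * rinner x y.
Proof. rewrite !nsq_rinner, rinner_addl, !rinner_addr, (rinner_sym y x). ring. Qed.

Lemma nsq_sub x y : nsq (hsub x y) = nsq x + nsq y - 2 * rinner x y.
Proof. rewrite !nsq_rinner, rinner_subl, !rinner_subr, (rinner_sym y x). ring. Qed.

Lemma nsq_scal t x : nsq (hscal (RC t) x) = t * t * nsq x.
Proof. rewrite !nsq_rinner, rinner_scall, rinner_scalr. ring. Qed.

Lemma nsq_opp x : nsq (hopp x) = nsq x.
Proof. rewrite !nsq_rinner, rinner_oppl, rinner_oppr. ring. Qed.

Lemma nsq_scalC a x : nsq (hscal a x) = (Cre a * Cre a + Cim a * Cim a) * nsq x.
Proof.
  unfold nsq. rewrite hinner_scal, hinner_scalr. simpl.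
  destruct (hinner_pos x) as [H0 _]. rewrite H0. ring.
Qed.

Lemma cs_sq x y : rinner x y * rinner x y <= nsq x * nsq y.
Proof.
  destruct (Req_dec (nsq x) 0) as [E|E].
  - apply nsq_0 in E. subst. rewrite rinner_0l, nsq_zero. lra.
  - pose proof (nsq_nonneg x) as P.
    set (t := rinner x y / nsq x).
    pose proof (nsq_nonneg (hsub y (hscal (RC t) x))) as Q.
    rewrite nsq_sub, nsq_scal, rinner_scalr, (rinner_sym y x) in Q.
    assert (E2 : nsq x * (nsq y + t * t * nsq x - 2 * (t * rinner x y)) = nsq x * nsq y - rinner x y * rinner x y) by (unfold t; field; lra).
    assert (0 <= nsq x * (nsq y + t * t * nsq x - 2 * (t * rinner x y))) by (apply Rmult_le_pos; lra).
    lra.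
Qed.

End HB.

Lemma veq {X : Hilbert} (v w : X) : (forall z, hinner v z = hinner w z) -> v = w.
Proof.
  intro E. apply hsub_eq0, nsq_0. unfold nsq, hsub. rewrite hinner_add, hinner_oppl, E.
  simpl. ring.
Qed.

Ltac veq_tac := apply veq; let z := fresh "z" in intro z; unfold hsub;
  repeat (rewrite ?hinner_add, ?hinner_scal, ?hinner_oppl, ?hinner_0l);
  apply Ceq; unfold Copp, RC, C0, C1, Ci, Cadd, Cmul; simpl; ring.

Ltac veq_ftac := apply veq; let z := fresh "z" in intro z; unfold hsub;
  repeat (rewrite ?hinner_add, ?hinner_scal, ?hinner_oppl, ?hinner_0l);
  apply Ceq; unfold Copp, RC, C0, C1, Ci, Cadd, Cmul; simpl; field; try lra.

Lemma fchoice {A B : Type} (P : A -> B -> Prop) : (forall a, exists b, P a b) -> exists f, forall a, P a (f a).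
Proof.
  intro H. exists (fun a => proj1_sig (constructive_indefinite_description _ (H a))).
  intro a. exact (proj2_sig (constructive_indefinite_description _ (H a))).
Qed.

Import Defs.
Import ListNotations.
Open Scope R_scope.

Ltac rexp := repeat (rewrite ?nsq_rinner, ?rinner_addl, ?rinner_addr, ?rinner_subl, ?rinner_subr,
   ?rinner_scall, ?rinner_scalr, ?rinner_oppl, ?rinner_oppr, ?rinner_0l, ?rinner_0r).

Section HN.
Context {X : Hilbert}.
Implicit Types x y z u v w : X.

Lemma hnorm_nsq x : hnorm x = sqrt (nsq x).
Proof. reflexivity. Qed.

Lemma hnorm_nonneg x : 0 <= hnorm x.
Proof. apply sqrt_pos. Qed.

Lemma hnorm_sq x : hnorm x * hnorm x = nsq x.
Proof. apply sqrt_sqrt, nsq_nonneg. Qed.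

Lemma hnorm_0 x : hnorm x = 0 -> x = hzero.
Proof. intro E. apply nsq_0. rewrite <- hnorm_sq, E. ring. Qed.

Lemma hnorm_zero : hnorm (@hzero X) = 0.
Proof. rewrite hnorm_nsq, nsq_zero. apply sqrt_0. Qed.

Lemma le_hnorm_sq a x : 0 <= a -> (hnorm x <= a <-> nsq x <= a * a).
Proof.
  intro Ha. rewrite <- hnorm_sq. pose proof (hnorm_nonneg x). split; intro; nra.
Qed.

Lemma lt_hnorm_sq a x : 0 <= a -> (hnorm x < a <-> nsq x < a * a).
Proof.
  intro Ha. rewrite <- hnorm_sq. pose proof (hnorm_nonneg x). split; intro; nra.
Qed.

Lemma cs x y : rinner x y <= hnorm x * hnorm y.
Proof.
  pose proof (cs_sq x y). rewrite <- (hnorm_sq x), <- (hnorm_sq y) in H.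
  pose proof (hnorm_nonneg x); pose proof (hnorm_nonneg y).
  destruct (Rle_dec (rinner x y) (hnorm x * hnorm y)) as [|Hn]; auto.
  exfalso. assert (0 <= hnorm x * hnorm y) by nra.
  assert (hnorm x * hnorm y * (hnorm x * hnorm y) < rinner x y * rinner x y) by nra. nra.
Qed.

Lemma cs_abs x y : Rabs (rinner x y) <= hnorm x * hnorm y.
Proof.
  unfold Rabs; destruct Rcase_abs.
  - pose proof (cs (hopp x) y). rewrite rinner_oppl in H.
    rewrite hnorm_nsq, nsq_opp in H. exact H.
  - apply cs.
Qed.

Lemma htri x y : hnorm (hadd x y) <= hnorm x + hnorm y.
Proof.
  apply le_hnorm_sq. pose proof (hnorm_nonneg x); pose proof (hnorm_nonneg y); lra.
  rewrite nsq_add. pose proof (cs x y). rewrite <- (hnorm_sq x), <- (hnorm_sq y). nra.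
Qed.

Lemma hnorm_opp x : hnorm (hopp x) = hnorm x.
Proof. rewrite !hnorm_nsq, nsq_opp. reflexivity. Qed.

Lemma hnorm_scal t x : hnorm (hscal (RC t) x) = Rabs t * hnorm x.
Proof.
  rewrite !hnorm_nsq, nsq_scal, sqrt_mult_alt by nra.
  change (t * t) with (Rsqr t). rewrite sqrt_Rsqr_abs. reflexivity.
Qed.

Lemma hnorm_scalC a x : hnorm (hscal a x) = sqrt (Cre a * Cre a + Cim a * Cim a) * hnorm x.
Proof. rewrite !hnorm_nsq, nsq_scalC, sqrt_mult_alt. reflexivity. nra. Qed.

Lemma htri_sub x y : hnorm (hsub x y) <= hnorm x + hnorm y.
Proof. unfold hsub. rewrite <- (hnorm_opp y). apply htri. Qed.

Lemma hnorm_sub_sym x y : hnorm (hsub x y) = hnorm (hsub y x).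
Proof. rewrite !hnorm_nsq, !nsq_sub, rinner_sym. f_equal; ring. Qed.

Lemma hsub_tri x y z : hnorm (hsub x z) <= hnorm (hsub x y) + hnorm (hsub y z).
Proof.
  replace (hsub x z) with (hadd (hsub x y) (hsub y z)). apply htri. veq_tac.
Qed.

Lemma hnorm_rev_tri x y : hnorm x - hnorm y <= hnorm (hsub x y).
Proof.
  pose proof (hsub_tri x y hzero). rewrite !hsub_0r in H. lra.
Qed.

Lemma conv_def (u : nat -> X) l :
  converges u l <-> forall eps, 0 < eps -> exists N, forall m, (N <= m)%nat -> hnorm (hsub (u m) l) < eps.
Proof. reflexivity. Qed.

Lemma conv_unique (u : nat -> X) l1 l2 : converges u l1 -> converges u l2 -> l1 = l2.
Proof.
  intros C1 C2. apply hsub_eq0, hnorm_0.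
  destruct (Req_dec (hnorm (hsub l1 l2)) 0) as [E|E]; auto.
  pose proof (hnorm_nonneg (hsub l1 l2)).
  set (e := hnorm (hsub l1 l2) / 2).
  destruct (C1 e) as [N1 H1]. unfold e; lra.
  destruct (C2 e) as [N2 H2]. unfold e; lra.
  specialize (H1 (N1 + N2)%nat ltac:(lia)). specialize (H2 (N1 + N2)%nat ltac:(lia)).
  unfold hdist in *. fold (hsub (u (N1+N2)%nat) l1) in H1. fold (hsub (u (N1+N2)%nat) l2) in H2.
  pose proof (hsub_tri l1 (u (N1+N2)%nat) l2) as T. rewrite (hnorm_sub_sym l1 (u (N1+N2)%nat)) in T.
  unfold e in *. lra.
Qed.

Lemma conv_const (l : X) : converges (fun _ : nat => l) l.
Proof. intros e He. exists O. intros. unfold hdist. fold (hsub l l). rewrite hsub_diag, hnorm_zero. auto. Qed.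

Lemma conv_bound (u : nat -> X) l (f : nat -> R) :
  (forall m, hnorm (hsub (u m) l) <= f m) -> Un_cv f 0 -> converges u l.
Proof.
  intros Hb Hf e He. destruct (Hf e He) as [N HN]. exists N. intros m Hm.
  specialize (HN m Hm). unfold R_dist in HN. rewrite Rminus_0_r in HN.
  unfold hdist. fold (hsub (u m) l). specialize (Hb m). apply Rabs_def2 in HN. lra.
Qed.

Lemma conv_add (u v : nat -> X) a b : converges u a -> converges v b ->
  converges (fun m => hadd (u m) (v m)) (hadd a b).
Proof.
  intros Cu Cv e He. destruct (Cu (e/2)) as [N1 H1]; [lra|]. destruct (Cv (e/2)) as [N2 H2]; [lra|].
  exists (N1+N2)%nat. intros m Hm. specialize (H1 m ltac:(lia)); specialize (H2 m ltac:(lia)).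
  unfold hdist in *. fold (hsub (hadd (u m) (v m)) (hadd a b)).
  fold (hsub (u m) a) in H1. fold (hsub (v m) b) in H2.
  replace (hsub (hadd (u m) (v m)) (hadd a b)) with (hadd (hsub (u m) a) (hsub (v m) b)).
  pose proof (htri (hsub (u m) a) (hsub (v m) b)). lra. veq_tac.
Qed.

Lemma hsub_opp_add x y : hsub x y = hadd x (hopp y).
Proof. reflexivity. Qed.

Lemma hscal_sub_distr a x y : hsub (hscal a x) (hscal a y) = hscal a (hsub x y).
Proof. symmetry; apply hscal_sub. Qed.

Lemma conv_scal (u : nat -> X) l a : converges u l -> converges (fun m => hscal a (u m)) (hscal a l).
Proof.
  intros Cu e He. set (K := sqrt (Cre a * Cre a + Cim a * Cim a) + 1).
  assert (HK : 0 < K) by (unfold K; pose proof (sqrt_pos (Cre a * Cre a + Cim a * Cim a)); lra).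
  destruct (Cu (e / K)) as [N HN]. apply Rdiv_lt_0_compat; lra.
  exists N. intros m Hm. specialize (HN m Hm). unfold hdist in *.
  fold (hsub (hscal a (u m)) (hscal a l)). fold (hsub (u m) l) in HN.
  rewrite hscal_sub_distr, hnorm_scalC.
  pose proof (sqrt_pos (Cre a * Cre a + Cim a * Cim a)). pose proof (hnorm_nonneg (hsub (u m) l)).
  apply Rle_lt_trans with (K * hnorm (hsub (u m) l)). unfold K; nra.
  apply Rmult_lt_compat_l with (r := K) in HN; auto. replace (K * (e / K)) with e in HN by (field; lra). exact HN.
Qed.

Lemma conv_sub (u v : nat -> X) a b : converges u a -> converges v b ->
  converges (fun m => hsub (u m) (v m)) (hsub a b).
Proof.
  intros Cu Cv. unfold hsub. apply conv_add; auto.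
  replace (fun m => hopp (v m)) with (fun m => hscal (RC (-1)) (v m)).
  rewrite hopp_scal. apply conv_scal; auto.
  apply functional_extensionality; intro; symmetry; apply hopp_scal.
Qed.

Lemma conv_norm (u : nat -> X) l : converges u l -> Un_cv (fun m => hnorm (u m)) (hnorm l).
Proof.
  intros Cu e He. destruct (Cu e He) as [N HN]. exists N. intros m Hm. specialize (HN m Hm).
  unfold hdist in HN. fold (hsub (u m) l) in HN. unfold R_dist.
  pose proof (hnorm_rev_tri (u m) l). pose proof (hnorm_rev_tri l (u m)).
  rewrite hnorm_sub_sym in H0. apply Rabs_def1; lra.
Qed.

Lemma conv_norm_le (u : nat -> X) l M : converges u l -> (forall m, hnorm (u m) <= M) -> hnorm l <= M.
Proof.
  intros Cu Hb. destruct (Rle_dec (hnorm l) M) as [|Hn]; auto. exfalso.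
  destruct (Cu (hnorm l - M)) as [N HN]; [lra|]. specialize (HN N (le_n _)).
  unfold hdist in HN. fold (hsub (u N) l) in HN. pose proof (hnorm_rev_tri l (u N)).
  rewrite hnorm_sub_sym in H. specialize (Hb N). lra.
Qed.

Lemma conv_rinner (u : nat -> X) l y : converges u l -> Un_cv (fun m => rinner (u m) y) (rinner l y).
Proof.
  intros Cu e He. destruct (Cu (e / (hnorm y + 1))) as [N HN].
  { pose proof (hnorm_nonneg y). apply Rdiv_lt_0_compat; lra. }
  exists N. intros m Hm. specialize (HN m Hm). unfold hdist in HN. fold (hsub (u m) l) in HN.
  unfold R_dist. replace (rinner (u m) y - rinner l y) with (rinner (hsub (u m) l) y) by (rewrite rinner_subl; ring).
  eapply Rle_lt_trans. apply cs_abs. pose proof (hnorm_nonneg y). pose proof (hnorm_nonneg (hsub (u m) l)).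
  apply Rle_lt_trans with (hnorm (hsub (u m) l) * (hnorm y + 1)). nra.
  apply Rmult_lt_compat_r with (r := hnorm y + 1) in HN; [|lra].
  replace (e / (hnorm y + 1) * (hnorm y + 1)) with e in HN by (field; lra). exact HN.
Qed.

Lemma Un_cv_le_const (a : nat -> R) l c : Un_cv a l -> (forall m, a m <= c) -> l <= c.
Proof.
  intros Ca Hb. destruct (Rle_dec l c) as [|Hn]; auto. exfalso.
  destruct (Ca (l - c)) as [N HN]; [lra|]. specialize (HN N (le_n _)). specialize (Hb N).
  unfold R_dist in HN. apply Rabs_def2 in HN. lra.
Qed.

Lemma Un_cv_unique' (a : nat -> R) l1 l2 : Un_cv a l1 -> Un_cv a l2 -> l1 = l2.
Proof. intros. eapply UL_sequence; eauto. Qed.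

Definition cauchy (u : nat -> X) := forall eps, 0 < eps -> exists N, forall m k, (N <= m)%nat -> (N <= k)%nat ->
  hnorm (hsub (u m) (u k)) < eps.

Lemma cauchy_conv (u : nat -> X) : cauchy u -> exists l, converges u l.
Proof. intro Hc. apply hcomplete in Hc. exact Hc. Qed.

End HN.

Section BL.
Context {X Y : Hilbert}.
Variable f : X -> Y.
Hypothesis Hf : bounded_linear f.

Lemma bl_add x y : f (hadd x y) = hadd (f x) (f y).
Proof. apply Hf. Qed.
Lemma bl_scal c x : f (hscal c x) = hscal c (f x).
Proof. apply Hf. Qed.
Lemma bl_zero : f hzero = hzero.
Proof. rewrite <- (hscal_0l (@hzero X)), bl_scal, hscal_0l. reflexivity. Qed.
Lemma bl_opp x : f (hopp x) = hopp (f x).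
Proof. rewrite !hopp_scal, bl_scal. reflexivity. Qed.
Lemma bl_sub x y : f (hsub x y) = hsub (f x) (f y).
Proof. unfold hsub. rewrite bl_add, bl_opp. reflexivity. Qed.

Lemma bl_bound : exists M, 0 < M /\ forall x, hnorm (f x) <= M * hnorm x.
Proof.
  destruct Hf as [_ [_ [M HM]]]. exists (Rabs M + 1). split. pose proof (Rabs_pos M); lra.
  intro x. specialize (HM x). pose proof (hnorm_nonneg x). pose proof (Rle_abs M). nra.
Qed.

Lemma bl_conv (u : nat -> X) l : converges u l -> converges (fun m => f (u m)) (f l).
Proof.
  intros Cu. destruct bl_bound as [M [HM HB]]. intros e He.
  destruct (Cu (e / M)) as [N HN]. apply Rdiv_lt_0_compat; lra.
  exists N. intros m Hm. specialize (HN m Hm). unfold hdist in *. fold (hsub (f (u m)) (f l)).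
  fold (hsub (u m) l) in HN. rewrite <- bl_sub. eapply Rle_lt_trans. apply HB.
  apply Rmult_lt_compat_l with (r := M) in HN; auto. replace (M * (e / M)) with e in HN by (field; lra). exact HN.
Qed.
End BL.

Import Defs.
Import ListNotations.
Open Scope R_scope.

Definition subsp {X : Hilbert} (S : X -> Prop) :=
  S hzero /\ (forall x y, S x -> S y -> S (hadd x y)) /\ (forall a x, S x -> S (hscal a x)).
Definition closedS {X : Hilbert} (S : X -> Prop) :=
  forall u l, (forall m, S (u m)) -> converges u l -> S l.
Definition orth {X : Hilbert} (v : X) (S : X -> Prop) := forall s, S s -> hinner v s = C0.

Lemma lim_le (a : nat -> R) L d : Un_cv a L -> (forall n, a n <= d + / (INR n + 1)) -> L <= d.
Proof.
  intros Ca Hb. destruct (Rle_dec L d) as [|Hn]; auto. exfalso.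
  destruct (archimed_cor1 ((L - d)/2)) as [N [HN1 HN2]]; [lra|].
  destruct (Ca ((L-d)/2)) as [M HM]; [lra|].
  specialize (HM (N + M)%nat ltac:(lia)). specialize (Hb (N+M)%nat).
  unfold R_dist in HM. apply Rabs_def2 in HM.
  assert (/ (INR (N + M) + 1) <= / INR N).
  { apply Rinv_le_contravar. apply lt_0_INR; lia. rewrite plus_INR. pose proof (pos_INR M). lra. }
  lra.
Qed.

Lemma inv_INR_small eps : 0 < eps -> exists N, forall n, (N <= n)%nat -> / (INR n + 1) < eps.
Proof.
  intro He. destruct (archimed_cor1 eps He) as [N [HN1 HN2]]. exists N. intros n Hn.
  eapply Rle_lt_trans; [|exact HN1]. apply Rinv_le_contravar. apply lt_0_INR; lia.
  apply le_INR in Hn. lra.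
Qed.

Section Sub.
Context {X : Hilbert}.
Implicit Types x y z u v w : X.
Variable S : X -> Prop.
Hypothesis HS : subsp S.

Lemma subsp0 : S hzero. Proof. apply HS. Qed.
Lemma subsp_add x y : S x -> S y -> S (hadd x y). Proof. apply HS. Qed.
Lemma subsp_scal a x : S x -> S (hscal a x). Proof. apply HS. Qed.
Lemma subsp_opp x : S x -> S (hopp x). Proof. intro. rewrite hopp_scal. apply subsp_scal; auto. Qed.
Lemma subsp_sub x y : S x -> S y -> S (hsub x y).
Proof. intros. apply subsp_add; auto. apply subsp_opp; auto. Qed.

Lemma orth_r v : (forall s, S s -> rinner v s = 0) -> orth v S.
Proof.
  intros H s Hs. apply hinner_from_r; apply H; auto. apply subsp_scal; auto.
Qed.

Hypothesis HC : closedS S.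

Lemma proj_exists x : exists p, S p /\ orth (hsub x p) S.
Proof.
  set (E := fun r => exists s, S s /\ r = - nsq (hsub x s)).
  assert (Hb : bound E). { exists 0. intros r [s [_ ->]]. pose proof (nsq_nonneg (hsub x s)). lra. }
  assert (Hne : exists r, E r). { exists (- nsq (hsub x hzero)). exists hzero. split; auto. apply subsp0. }
  destruct (completeness E Hb Hne) as [m [Hm1 Hm2]].
  set (d := - m).
  assert (Hi : forall s, S s -> d <= nsq (hsub x s)).
  { intros s Hs. assert (E (- nsq (hsub x s))) by (exists s; auto). apply Hm1 in H. unfold d. lra. }
  assert (Hii : forall n : nat, exists s, S s /\ nsq (hsub x s) < d + / (INR n + 1)).
  { intro n. apply NNPP. intro Hn.
    assert (HH : is_upper_bound E (m - / (INR n + 1))).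
    { intros r [s [Hs ->]]. destruct (Rle_dec (- nsq (hsub x s)) (m - / (INR n + 1))) as [|Hr]; auto.
      exfalso. apply Hn. exists s. split; auto. unfold d. lra. }
    apply Hm2 in HH. assert (0 < / (INR n + 1)). { apply Rinv_0_lt_compat. pose proof (pos_INR n); lra. }
    lra. }
  apply fchoice in Hii. destruct Hii as [sq Hsq].
  assert (Hcau : cauchy sq).
  { intros e He. destruct (inv_INR_small (e * e / 4)) as [N HN]. nra.
    exists N. intros n k Hn Hk. apply lt_hnorm_sq; [lra|].
    destruct (Hsq n) as [Sn Hn']. destruct (Hsq k) as [Sk Hk'].
    set (mid := hscal (RC (/2)) (hadd (sq n) (sq k))).
    assert (Smid : S mid) by (apply subsp_scal, subsp_add; auto).
    pose proof (Hi mid Smid).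
    assert (PG : nsq (hsub (hsub x (sq n)) (hsub x (sq k))) + nsq (hadd (hsub x (sq n)) (hsub x (sq k)))
       = 2 * nsq (hsub x (sq n)) + 2 * nsq (hsub x (sq k))) by (rewrite nsq_sub, nsq_add; ring).
    replace (hsub (hsub x (sq n)) (hsub x (sq k))) with (hsub (sq k) (sq n)) in PG by veq_tac.
    replace (hadd (hsub x (sq n)) (hsub x (sq k))) with (hscal (RC 2) (hsub x mid)) in PG by (unfold mid; veq_ftac).
    rewrite nsq_scal in PG. replace (nsq (hsub (sq n) (sq k))) with (nsq (hsub (sq k) (sq n))) by (rewrite !nsq_sub, rinner_sym; ring).
    specialize (HN n Hn) as HNn. specialize (HN k Hk) as HNk. lra. }
  destruct (cauchy_conv _ Hcau) as [p Hp].
  assert (Sp : S p) by (apply (HC sq p); auto; intro; apply Hsq).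
  exists p. split; auto.
  assert (Hd : nsq (hsub x p) <= d).
  { assert (Cx : converges (fun n => hsub x (sq n)) (hsub x p)) by (apply conv_sub; auto; apply conv_const).
    apply conv_norm in Cx. pose proof (CV_mult _ _ _ _ Cx Cx) as Cm. simpl in Cm.
    rewrite hnorm_sq in Cm. apply (lim_le _ _ _ Cm). intro n. rewrite hnorm_sq. left; apply Hsq. }
  apply orth_r. intros s Hs.
  assert (Hv : forall t, 0 <= t * t * nsq s - 2 * t * rinner (hsub x p) s).
  { intro t. assert (S (hadd p (hscal (RC t) s))) by (apply subsp_add; auto; apply subsp_scal; auto).
    apply Hi in H. replace (hsub x (hadd p (hscal (RC t) s))) with (hsub (hsub x p) (hscal (RC t) s)) in H by veq_tac.
    rewrite nsq_sub, nsq_scal, rinner_scalr in H. lra. }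
  destruct (Req_dec (nsq s) 0) as [E0|E0].
  - apply nsq_0 in E0. subst. apply rinner_0r.
  - pose proof (nsq_nonneg s). specialize (Hv (rinner (hsub x p) s / nsq s)).
    set (r := rinner (hsub x p) s) in *.
    assert (E2 : r / nsq s * (r / nsq s) * nsq s - 2 * (r / nsq s) * r = - (r * r) / nsq s) by (field; lra).
    rewrite E2 in Hv. assert (0 < nsq s) by lra.
    assert (r * r <= 0). { apply Rmult_le_reg_r with (r := / nsq s). apply Rinv_0_lt_compat; lra.
      rewrite Rmult_0_l. unfold Rdiv in Hv. lra. }
    nra.
Qed.

End Sub.

Section Proj.
Context {X : Hilbert}.
Implicit Types x y z u v w : X.

Lemma orth_add u v (S : X -> Prop) : orth u S -> orth v S -> orth (hadd u v) S.
Proof. intros H1 H2 s Hs. rewrite hinner_add, H1, H2; auto. apply Ceq; simpl; ring. Qed.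
Lemma orth_scal a u (S : X -> Prop) : orth u S -> orth (hscal a u) S.
Proof. intros H1 s Hs. rewrite hinner_scal, H1; auto. apply Ceq; simpl; ring. Qed.
Lemma orth_opp u (S : X -> Prop) : orth u S -> orth (hopp u) S.
Proof. intro. rewrite hopp_scal. apply orth_scal; auto. Qed.
Lemma orth_sub u v (S : X -> Prop) : orth u S -> orth v S -> orth (hsub u v) S.
Proof. intros. apply orth_add; auto. apply orth_opp; auto. Qed.
Lemma orth_0 (S : X -> Prop) : orth hzero S.
Proof. intros s _. apply hinner_0l. Qed.

Lemma orth_self u (S : X -> Prop) : orth u S -> S u -> u = hzero.
Proof. intros H1 H2. apply nsq_0. unfold nsq. rewrite H1; auto. Qed.

Lemma hinner_C0_sym u v : hinner u v = C0 -> hinner v u = C0.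
Proof. intro E. rewrite hinner_conj, E. apply Ceq; simpl; ring. Qed.

Lemma C0_rinner u v : hinner u v = C0 -> rinner u v = 0.
Proof. unfold rinner. intros ->. reflexivity. Qed.

Lemma pythag u v : hinner u v = C0 -> nsq (hadd u v) = nsq u + nsq v.
Proof. intro E. rewrite nsq_add. apply C0_rinner in E. rewrite E. ring. Qed.

Definition orthc (S : X -> Prop) : X -> Prop := fun v => orth v S.

Lemma orthc_subsp S : subsp (orthc S).
Proof.
  split; [|split]. apply orth_0. intros; apply orth_add; auto. intros; apply orth_scal; auto.
Qed.

Lemma orthc_closed S : closedS (orthc S).
Proof.
  intros u l Hu Cu s Hs. apply Ceq.
  - apply (Un_cv_unique' (fun m => rinner (u m) s)). apply conv_rinner; auto.
    intros e He. exists O. intros. specialize (Hu n s Hs). unfold R_dist, rinner. rewrite Hu. simpl.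
    rewrite Rminus_0_r, Rabs_R0. auto.
  - simpl. rewrite <- rinner_Ci. apply (Un_cv_unique' (fun m => rinner (u m) (hscal Ci s))). apply conv_rinner; auto.
    intros e He. exists O. intros. rewrite rinner_Ci. specialize (Hu n s Hs). unfold R_dist. rewrite Hu. simpl.
    rewrite Rminus_0_r, Rabs_R0. auto.
Qed.

Lemma proj_unique (S : X -> Prop) x p q : subsp S -> S p -> orth (hsub x p) S -> S q -> orth (hsub x q) S -> p = q.
Proof.
  intros HS Sp Op Sq Oq. apply hsub_eq0. apply (orth_self _ S).
  replace (hsub p q) with (hsub (hsub x q) (hsub x p)) by veq_tac. apply orth_sub; auto.
  apply subsp_sub; auto.
Qed.

Definition Pr (S : X -> Prop) (x : X) : X :=
  epsilon (inhabits x) (fun p => S p /\ orth (hsub x p) S).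

Variable S : X -> Prop.
Hypothesis HS : subsp S.
Hypothesis HC : closedS S.

Lemma Pr_spec x : S (Pr S x) /\ orth (hsub x (Pr S x)) S.
Proof. unfold Pr. apply epsilon_spec. apply proj_exists; auto. Qed.

Lemma Pr_in x : S (Pr S x). Proof. apply Pr_spec. Qed.
Lemma Pr_orth x : orth (hsub x (Pr S x)) S. Proof. apply Pr_spec. Qed.

Lemma Pr_char x p : S p -> orth (hsub x p) S -> Pr S x = p.
Proof. intros. eapply proj_unique; eauto; apply Pr_spec. Qed.

Lemma Pr_id x : S x -> Pr S x = x.
Proof. intro. apply Pr_char; auto. rewrite hsub_diag. apply orth_0. Qed.

Lemma Pr_add x y : Pr S (hadd x y) = hadd (Pr S x) (Pr S y).
Proof.
  apply Pr_char. apply subsp_add; auto; apply Pr_in.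
  replace (hsub (hadd x y) (hadd (Pr S x) (Pr S y))) with (hadd (hsub x (Pr S x)) (hsub y (Pr S y))) by veq_tac.
  apply orth_add; apply Pr_orth.
Qed.

Lemma Pr_scal a x : Pr S (hscal a x) = hscal a (Pr S x).
Proof.
  apply Pr_char. apply subsp_scal; auto; apply Pr_in.
  rewrite <- hscal_sub. apply orth_scal, Pr_orth.
Qed.

Lemma Pr_orth_zero x : orth x S -> Pr S x = hzero.
Proof. intro. apply Pr_char. apply subsp0; auto. rewrite hsub_0r. auto. Qed.

Lemma Pr_norm x : hnorm (Pr S x) <= hnorm x.
Proof.
  apply le_hnorm_sq. apply hnorm_nonneg. rewrite hnorm_sq.
  replace x with (hadd (hsub x (Pr S x)) (Pr S x)) at 2 by veq_tac.
  rewrite pythag. pose proof (nsq_nonneg (hsub x (Pr S x))). lra. apply Pr_orth, Pr_in.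
Qed.

Lemma Pr_bl : bounded_linear (Pr S).
Proof.
  split; [|split]. apply Pr_add. apply Pr_scal. exists 1. intro. rewrite Rmult_1_l. apply Pr_norm.
Qed.

End Proj.

Section Ker.
Context {X Y : Hilbert}.
Variable f : X -> Y.
Hypothesis Hf : bounded_linear f.

Definition kerS : X -> Prop := fun x => f x = hzero.
Definition imS : Y -> Prop := fun y => exists x, f x = y.

Lemma ker_subsp : subsp kerS.
Proof.
  unfold kerS. split; [|split].
  - apply (bl_zero f Hf).
  - intros. rewrite (bl_add f Hf), H, H0. apply hadd_0.
  - intros. rewrite (bl_scal f Hf), H. apply hscal_0r.
Qed.

Lemma im_subsp : subsp imS.
Proof.
  unfold imS. split; [|split].
  - exists hzero. apply (bl_zero f Hf).
  - intros a b [x <-] [y <-]. exists (hadd x y). apply (bl_add f Hf).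
  - intros c a [x <-]. exists (hscal c x). apply (bl_scal f Hf).
Qed.

Lemma ker_closed : closedS kerS.
Proof.
  intros u l Hu Cu. unfold kerS. apply (bl_conv f Hf) in Cu.
  eapply conv_unique. exact Cu. replace (fun m => f (u m)) with (fun _ : nat => @hzero Y).
  apply conv_const. apply functional_extensionality. intro; symmetry; apply Hu.
Qed.

Variable f' : Y -> X.
Hypothesis Hadj : is_adjoint f f'.

Lemma orth_im_iff y : orth y imS <-> f' y = hzero.
Proof.
  split.
  - intro H. apply nsq_0. unfold nsq. rewrite <- Hadj. rewrite (hinner_C0_sym _ _ (H _ (ex_intro _ (f' y) eq_refl))). reflexivity.
  - intros E s [x <-]. apply hinner_C0_sym. rewrite Hadj, E. apply hinner_0r.
Qed.

Lemma adj_orth_ker y : orth (f' y) kerS.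
Proof.
  intros s Hs. apply hinner_C0_sym. rewrite <- Hadj. unfold kerS in Hs. rewrite Hs. apply hinner_0l.
Qed.
End Ker.

Import Defs.
Import ListNotations.
Open Scope R_scope.

Lemma half_pow_small eps : 0 < eps -> exists N, forall n, (N <= n)%nat -> (/2) ^ n < eps.
Proof.
  intro He. destruct (pow_lt_1_zero (/2)) with (y := eps) as [N HN]; auto.
  rewrite Rabs_right; lra. exists N. intros n Hn. specialize (HN n Hn).
  rewrite Rabs_right in HN; auto. apply Rle_ge. apply pow_le. lra.
Qed.

Lemma half_pow_pos n : 0 < (/2) ^ n.
Proof. apply pow_lt. lra. Qed.

Lemma half_pow_S n : (/2) ^ (S n) = (/2) ^ n / 2.
Proof. simpl. field. Qed.

Lemma half_pow_le m n : (m <= n)%nat -> (/2) ^ n <= (/2) ^ m.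
Proof.
  intro H. induction H. lra. rewrite half_pow_S. pose proof (half_pow_pos m0). lra.
Qed.

Section OM.
Context {X Y : Hilbert}.
Variable T : X -> Y.
Hypothesis HT : bounded_linear T.
Hypothesis Hcl : closedS (imS T).

Definition Fn (n : nat) (y : Y) := forall eps, 0 < eps -> exists x, hnorm x <= INR n /\ hnorm (hsub (T x) y) < eps.

Lemma conv_shift {Z : Hilbert} (u : nat -> Z) l k : converges u l -> converges (fun m => u (m + k)%nat) l.
Proof. intros Cu e He. destruct (Cu e He) as [N HN]. exists N. intros. apply HN. lia. Qed.

Lemma baire_step : (forall n c r, imS T c -> 0 < r -> exists y, imS T y /\ hnorm (hsub y c) < r /\ ~ Fn n y) ->
  forall n c r, imS T c -> 0 < r -> exists c' r', imS T c' /\ 0 < r' /\ r' <= r / 2 /\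
    hnorm (hsub c' c) + r' <= r /\ forall z, hnorm (hsub z c') <= r' -> ~ Fn n z.
Proof.
  intros H n c r Hc Hr. destruct (H n c r Hc Hr) as [y [Hy [Hyc HF]]].
  assert (He : exists e, 0 < e /\ forall x, hnorm x <= INR n -> e <= hnorm (hsub (T x) y)).
  { apply NNPP. intro Hn. apply HF. intros e He. apply NNPP. intro Hn2. apply Hn. exists e. split; auto.
    intros x Hx. apply Rnot_lt_le. intro. apply Hn2. exists x. auto. }
  destruct He as [e [He HE]].
  exists y, (Rmin (e/2) ((r - hnorm (hsub y c))/2)).
  assert (0 < Rmin (e / 2) ((r - hnorm (hsub y c)) / 2)) by (apply Rmin_glb_lt; lra).
  pose proof (Rmin_l (e/2) ((r - hnorm (hsub y c))/2)). pose proof (Rmin_r (e/2) ((r - hnorm (hsub y c))/2)).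
  pose proof (hnorm_nonneg (hsub y c)).
  split; auto. split; auto. split. lra. split. lra.
  intros z Hz Fz. destruct (Fz (e/2)) as [x [Hx1 Hx2]]. lra.
  pose proof (hsub_tri (T x) z y). pose proof (HE x Hx1). lra.
Qed.

Lemma baire : exists n c r, imS T c /\ 0 < r /\ forall y, imS T y -> hnorm (hsub y c) < r -> Fn n y.
Proof.
  apply NNPP. intro Hn.
  assert (H : forall n c r, imS T c -> 0 < r -> exists y, imS T y /\ hnorm (hsub y c) < r /\ ~ Fn n y).
  { intros n c r Hc Hr. apply NNPP. intro H2. apply Hn. exists n, c, r. split; auto. split; auto.
    intros y Hy Hyc. apply NNPP. intro. apply H2. exists y. auto. }
  pose proof (baire_step H) as BS.
  assert (Hch : forall p : nat * (Y * R), exists q : Y * R,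
     imS T (fst (snd p)) -> 0 < snd (snd p) ->
     imS T (fst q) /\ 0 < snd q /\ snd q <= snd (snd p) / 2 /\
     hnorm (hsub (fst q) (fst (snd p))) + snd q <= snd (snd p) /\
     forall z, hnorm (hsub z (fst q)) <= snd q -> ~ Fn (fst p) z).
  { intros [n [c r]]. simpl. destruct (classic (imS T c /\ 0 < r)) as [[Hc Hr]|Hno].
    - destruct (BS n c r Hc Hr) as [c' [r' Hq]]. exists (c', r'). simpl. auto.
    - exists (c, r). intros. exfalso; auto. }
  apply fchoice in Hch. destruct Hch as [step Hstep].
  set (cr := fix cr (k : nat) : Y * R := match k with O => (hzero, 1) | S k => step (k, cr k) end).
  assert (Inv : forall k, imS T (fst (cr k)) /\ 0 < snd (cr k)).
  { induction k. simpl. split. exists hzero. apply (bl_zero T HT). lra.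
    destruct IHk. destruct (Hstep (k, cr k)) as [A [B _]]; auto. }
  assert (Step : forall k, snd (cr (S k)) <= snd (cr k) / 2 /\
     hnorm (hsub (fst (cr (S k))) (fst (cr k))) + snd (cr (S k)) <= snd (cr k) /\
     forall z, hnorm (hsub z (fst (cr (S k)))) <= snd (cr (S k)) -> ~ Fn k z).
  { intro k. destruct (Inv k). destruct (Hstep (k, cr k)) as [_ [_ [A [B C]]]]; auto. }
  set (c := fun k => fst (cr k)). set (r := fun k => snd (cr k)).
  assert (Hr : forall k, r k <= (/2) ^ k).
  { induction k. simpl. unfold r. simpl. lra. rewrite half_pow_S. destruct (Step k) as [A _]. unfold r in *. lra. }
  assert (Hnest : forall k m, (k <= m)%nat -> hnorm (hsub (c m) (c k)) + r m <= r k).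
  { intros k m Hkm. induction Hkm. rewrite hsub_diag, hnorm_zero. lra.
    destruct (Step m) as [_ [A _]]. pose proof (hsub_tri (c (S m)) (c m) (c k)). unfold c, r in *. lra. }
  assert (Hcau : cauchy c).
  { intros e He. destruct (half_pow_small e He) as [N HN]. exists N. intros m k Hm Hk.
    destruct (Nat.le_ge_cases k m) as [Hkm|Hkm].
    - pose proof (Hnest k m Hkm). pose proof (Inv m). pose proof (Hr k). specialize (HN k Hk). unfold r in *. lra.
    - pose proof (Hnest m k Hkm). pose proof (Inv k). pose proof (Hr m). specialize (HN m Hm).
      rewrite hnorm_sub_sym. unfold r in *. lra. }
  destruct (cauchy_conv _ Hcau) as [l Hl].
  assert (Il : imS T l). { apply (Hcl c l); auto. intro m. apply Inv. }
  assert (Hfar : forall k, ~ Fn k l).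
  { intro k. destruct (Step k) as [_ [_ C]]. apply C.
    assert (Cv : converges (fun m => hsub (c (m + S k)%nat) (c (S k))) (hsub l (c (S k)))).
    { apply conv_sub. apply conv_shift; auto. apply conv_const. }
    apply (conv_norm_le _ _ _ Cv). intro m. pose proof (Hnest (S k) (m + S k)%nat ltac:(lia)).
    pose proof (Inv (m + S k)%nat). unfold c, r in *. lra. }
  destruct Il as [x Hx]. destruct (INR_unbounded (hnorm x)) as [k Hk].
  apply (Hfar k). intros e He. exists x. split. lra. rewrite Hx, hsub_diag, hnorm_zero. auto.
Qed.

Lemma om_approx : exists K, 0 < K /\ forall y, imS T y -> forall eps, 0 < eps ->
  exists x, hnorm x <= K * hnorm y /\ hnorm (hsub (T x) y) < eps.
Proof.
  destruct baire as [n [c [r [Hc [Hr HF]]]]].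
  assert (G : forall y, imS T y -> hnorm y < r -> forall eps, 0 < eps ->
     exists x, hnorm x <= 2 * INR n /\ hnorm (hsub (T x) y) < eps).
  { intros y Hy Hyr e He.
    assert (F1 : Fn n (hadd c y)). { apply HF. apply im_subsp; auto. replace (hsub (hadd c y) c) with y by veq_tac. auto. }
    assert (F2 : Fn n c). { apply HF; auto. rewrite hsub_diag, hnorm_zero. auto. }
    destruct (F1 (e/2)) as [x1 [A1 B1]]; [lra|]. destruct (F2 (e/2)) as [x2 [A2 B2]]; [lra|].
    exists (hsub x1 x2). split. pose proof (htri_sub x1 x2). lra.
    rewrite (bl_sub T HT). replace (hsub (hsub (T x1) (T x2)) y) with (hsub (hsub (T x1) (hadd c y)) (hsub (T x2) c)) by veq_tac.
    pose proof (htri_sub (hsub (T x1) (hadd c y)) (hsub (T x2) c)). lra. }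
  exists (4 * INR n / r + 1). split. pose proof (pos_INR n). assert (0 <= 4 * INR n / r) by (apply Rmult_le_pos; [lra| left; apply Rinv_0_lt_compat; lra]). lra.
  intros y Hy e He. destruct (Req_dec (hnorm y) 0) as [E0|E0].
  - exists hzero. rewrite (bl_zero T HT), hnorm_zero, E0. apply hnorm_0 in E0. subst.
    rewrite hsub_diag, hnorm_zero. lra.
  - pose proof (hnorm_nonneg y). set (t := r / (2 * hnorm y)).
    assert (Ht : 0 < t) by (unfold t; apply Rdiv_lt_0_compat; lra).
    destruct (G (hscal (RC t) y)) with (eps := e * t) as [x' [A B]].
    apply im_subsp; auto. rewrite hnorm_scal, Rabs_right by lra. unfold t. field_simplify; lra. nra.
    exists (hscal (RC (/t)) x'). split.
    + rewrite hnorm_scal, Rabs_right. 2: { apply Rle_ge. left. apply Rinv_0_lt_compat; lra. }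
      apply Rle_trans with (/ t * (2 * INR n)). apply Rmult_le_compat_l; auto. left; apply Rinv_0_lt_compat; lra.
      unfold t. pose proof (pos_INR n). replace (/ (r / (2 * hnorm y)) * (2 * INR n)) with (4 * INR n / r * hnorm y) by (field; lra).
      nra.
    + rewrite (bl_scal T HT). replace (hsub (hscal (RC (/ t)) (T x')) y) with (hscal (RC (/t)) (hsub (T x') (hscal (RC t) y))) by veq_ftac.
      rewrite hnorm_scal, Rabs_right. 2: { apply Rle_ge. left. apply Rinv_0_lt_compat; lra. }
      apply Rmult_lt_compat_l with (r := / t) in B. replace (/ t * (e * t)) with e in B by (field; lra). exact B.
      apply Rinv_0_lt_compat; lra.
Qed.

Theorem open_mapping : exists C, 0 < C /\ forall y, imS T y -> exists x, T x = y /\ hnorm x <= C * hnorm y.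
Proof.
  destruct om_approx as [K [HK HA]]. exists (2 * K). split. lra. intros y Hy.
  destruct (Req_dec (hnorm y) 0) as [E0|E0].
  { exists hzero. apply hnorm_0 in E0. subst. rewrite (bl_zero T HT), !hnorm_zero. split; auto. lra. }
  pose proof (hnorm_nonneg y). set (ny := hnorm y).
  assert (Hch : forall p : nat * Y, exists x, imS T (snd p) ->
     hnorm x <= K * hnorm (snd p) /\ hnorm (hsub (T x) (snd p)) < ny * (/2) ^ (S (fst p))).
  { intros [k z]. simpl. destruct (classic (imS T z)) as [Hz|Hz].
    - destruct (HA z Hz (ny * (/2) ^ S k)) as [x Hx]. apply Rmult_lt_0_compat. unfold ny; lra. apply half_pow_pos.
      exists x. auto.
    - exists hzero. intro; contradiction. }
  apply fchoice in Hch. destruct Hch as [g Hg].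
  set (zx := fix zx (k : nat) : Y * X := match k with O => (y, g (O, y)) | S k =>
       let z' := hsub (fst (zx k)) (T (snd (zx k))) in (z', g (S k, z')) end).
  set (z := fun k => fst (zx k)). set (x := fun k => snd (zx k)).
  assert (Hx : forall k, x k = g (k, z k)). { destruct k; reflexivity. }
  assert (Hz : forall k, z (S k) = hsub (z k) (T (x k))). { intro; reflexivity. }
  assert (Inv : forall k, imS T (z k) /\ hnorm (z k) <= ny * (/2) ^ k).
  { induction k. { change (z 0%nat) with y. split; [exact Hy|]. simpl. unfold ny; lra. }
    destruct IHk as [I1 I2]. rewrite Hz. split. apply (subsp_sub _ (im_subsp T HT)); auto. exists (x k); auto.
    destruct (Hg (k, z k) I1) as [_ B]. simpl in B. rewrite <- Hx in B. rewrite hnorm_sub_sym. simpl. lra. }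
  assert (Hxk : forall k, hnorm (x k) <= K * ny * (/2) ^ k).
  { intro k. destruct (Inv k) as [I1 I2]. destruct (Hg (k, z k) I1) as [A _]. simpl in A. rewrite <- Hx in A.
    rewrite Rmult_assoc. eapply Rle_trans; [exact A|]. apply Rmult_le_compat_l; lra. }
  set (s := fix s (k : nat) : X := match k with O => hzero | S k => hadd (s k) (x k) end).
  assert (Hs : forall k m, (k <= m)%nat -> hnorm (hsub (s m) (s k)) <= 2 * K * ny * ((/2) ^ k - (/2) ^ m)).
  { intros k m Hkm. induction Hkm. rewrite hsub_diag, hnorm_zero. lra.
    replace (hsub (s (S m)) (s k)) with (hadd (hsub (s m) (s k)) (x m)) by (simpl; veq_tac).
    pose proof (htri (hsub (s m) (s k)) (x m)). pose proof (Hxk m). rewrite half_pow_S. lra. }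
  assert (Hts : forall k, T (s k) = hsub y (z k)).
  { induction k. simpl. rewrite (bl_zero T HT). unfold z; simpl. rewrite hsub_diag. reflexivity.
    simpl. rewrite (bl_add T HT), IHk, Hz. veq_tac. }
  assert (Hcau : cauchy s).
  { intros e He. destruct (half_pow_small (e / (2 * K * ny + 1))) as [N HN].
    apply Rdiv_lt_0_compat; auto. unfold ny; nra.
    exists N. intros m k Hm Hk. assert (0 < 2 * K * ny) by (unfold ny; nra).
    assert (HH : forall a b, (N <= a)%nat -> (a <= b)%nat -> hnorm (hsub (s b) (s a)) < e).
    { intros a b Ha Hab. pose proof (Hs a b Hab). pose proof (HN a Ha). pose proof (half_pow_pos b).
      apply Rle_lt_trans with (2 * K * ny * (/2) ^ a). nra.
      apply Rmult_lt_compat_l with (r := 2 * K * ny + 1) in H2; [|lra].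
      replace ((2 * K * ny + 1) * (e / (2 * K * ny + 1))) with e in H2 by (field; lra). nra. }
    destruct (Nat.le_ge_cases k m). apply HH; auto. rewrite hnorm_sub_sym. apply HH; auto. }
  destruct (cauchy_conv _ Hcau) as [l Hl]. exists l. split.
  - apply (conv_unique (fun k => T (s k))). apply (bl_conv T HT); auto.
    apply (conv_bound _ _ (fun k => ny * (/2) ^ k)).
    { intro m. rewrite Hts. replace (hsub (hsub y (z m)) y) with (hopp (z m)) by veq_tac. rewrite hnorm_opp. apply Inv. }
    intros e He. destruct (half_pow_small (e / (ny + 1))) as [N HN]. apply Rdiv_lt_0_compat; unfold ny; lra.
    exists N. intros n Hn. unfold R_dist. rewrite Rminus_0_r. pose proof (half_pow_pos n). rewrite Rabs_right by (apply Rle_ge; unfold ny; nra).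
    specialize (HN n Hn). apply Rmult_lt_compat_l with (r := ny + 1) in HN; [|unfold ny; lra].
    replace ((ny + 1) * (e / (ny + 1))) with e in HN by (field; unfold ny; lra). unfold ny in *; nra.
  - apply (conv_norm_le s); auto. intro m. pose proof (Hs O m ltac:(lia)). simpl in H0.
    replace (s O) with (@hzero X) in H0 by reflexivity. rewrite hsub_0r in H0. pose proof (half_pow_pos m). unfold ny in *. assert (0 <= K * hnorm y * (/2)^m) by (repeat apply Rmult_le_pos; lra). lra.
Qed.

End OM.

Import Defs.
Import ListNotations.
Open Scope R_scope.

Section BLops.
Context {X Y Z : Hilbert}.

Lemma bl_comp (f : X -> Y) (g : Y -> Z) : bounded_linear f -> bounded_linear g -> bounded_linear (ocomp g f).
Proof.
  intros Hf Hg. unfold ocomp. split; [|split].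
  - intros. rewrite (bl_add f Hf), (bl_add g Hg). reflexivity.
  - intros. rewrite (bl_scal f Hf), (bl_scal g Hg). reflexivity.
  - destruct (bl_bound f Hf) as [M1 [P1 B1]]. destruct (bl_bound g Hg) as [M2 [P2 B2]].
    exists (M2 * M1). intro x. eapply Rle_trans. apply B2. rewrite Rmult_assoc. apply Rmult_le_compat_l; [lra|]. apply B1.
Qed.

Lemma bl_oadd (f g : X -> Y) : bounded_linear f -> bounded_linear g -> bounded_linear (oadd f g).
Proof.
  intros Hf Hg. unfold oadd. split; [|split].
  - intros. rewrite (bl_add f Hf), (bl_add g Hg). veq_tac.
  - intros. rewrite (bl_scal f Hf), (bl_scal g Hg). rewrite hscal_addr. reflexivity.
  - destruct (bl_bound f Hf) as [M1 [P1 B1]]. destruct (bl_bound g Hg) as [M2 [P2 B2]].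
    exists (M1 + M2). intro x. eapply Rle_trans. apply htri. specialize (B1 x); specialize (B2 x). lra.
Qed.

Lemma bl_id : bounded_linear (@oid X).
Proof. unfold oid. split; [|split]; auto. exists 1. intro; lra. Qed.
End BLops.

Lemma bounded_below {X Y : Hilbert} (T : X -> Y) : bounded_linear T -> closedS (imS T) ->
  exists c, 0 < c /\ forall v, orth v (kerS T) -> hnorm v <= c * hnorm (T v).
Proof.
  intros HT Hcl. destruct (open_mapping T HT Hcl) as [C [HC HO]]. exists C. split; auto.
  intros v Hv. destruct (HO (T v)) as [x [Hx1 Hx2]]. exists v; auto.
  assert (Hk : kerS T (hsub v x)). { unfold kerS. rewrite (bl_sub T HT), Hx1. apply hsub_diag. }
  pose proof (C0_rinner _ _ (Hv _ Hk)). rewrite rinner_subr in H.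
  pose proof (cs v x). pose proof (hnorm_nonneg v). pose proof (hnorm_nonneg x).
  assert (hnorm v <= hnorm x).
  { rewrite <- nsq_rinner, <- hnorm_sq in H. destruct (Req_dec (hnorm v) 0). lra. nra. }
  lra.
Qed.

Section Lap.
Context {E0 E1 E2 : Hilbert}.
Variables (a : E0 -> E1) (a' : E1 -> E0) (b : E1 -> E2) (b' : E2 -> E1).
Hypotheses (Ha : bounded_linear a) (Ha' : bounded_linear a') (Hb : bounded_linear b) (Hb' : bounded_linear b').
Hypotheses (Aa : is_adjoint a a') (Ab : is_adjoint b b').
Hypothesis Hba : forall x, b (a x) = hzero.
Hypotheses (Cla : closedS (imS a)) (Clb : closedS (imS b)).

Definition Dl : E1 -> E1 := oadd (ocomp a a') (ocomp b' b).

Lemma Dl_bl : bounded_linear Dl.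
Proof. apply bl_oadd; apply bl_comp; auto. Qed.

Lemma Dl_adj : is_adjoint Dl Dl.
Proof.
  intros u v. unfold Dl, oadd, ocomp. rewrite hinner_add, hinner_addr.
  rewrite Aa, <- Ab. rewrite (hinner_conj v (b' (b u))), <- Ab.
  rewrite (hinner_conj (a (a' v)) u), Aa.
  rewrite (hinner_conj (a' u) (a' v)), (hinner_conj (b v) (b u)).
  apply Ceq; simpl; ring.
Qed.

Lemma Dl_rinner v : rinner (Dl v) v = nsq (a' v) + nsq (b v).
Proof.
  unfold Dl, oadd, ocomp. rewrite rinner_addl. unfold rinner, nsq. rewrite Aa.
  rewrite (hinner_conj v (b' (b v))), <- Ab. simpl. reflexivity.
Qed.

Lemma Dl_ker v : Dl v = hzero -> a' v = hzero /\ b v = hzero.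
Proof.
  intro E. pose proof (Dl_rinner v). rewrite E, rinner_0l in H.
  pose proof (nsq_nonneg (a' v)); pose proof (nsq_nonneg (b v)).
  split; apply nsq_0; lra.
Qed.

Lemma Dl_ker' v : a' v = hzero -> b v = hzero -> Dl v = hzero.
Proof. intros E1' E2'. unfold Dl, oadd, ocomp. rewrite E1', E2', (bl_zero a Ha), (bl_zero b' Hb'). apply hadd_0. Qed.

Lemma Dl_below : exists c, 0 < c /\ forall v, orth v (kerS Dl) -> hnorm v <= c * hnorm (Dl v).
Proof.
  destruct (bounded_below b Hb Clb) as [cb [Pcb Bb]].
  destruct (open_mapping a Ha Cla) as [ca [Pca Oa]].
  assert (Ba : forall v1, imS a v1 -> hnorm v1 <= ca * hnorm (a' v1)).
  { intros v1 Hv1. destruct (Oa v1 Hv1) as [x [Hx1 Hx2]].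
    assert (E : nsq v1 = rinner x (a' v1)). { unfold nsq, rinner. rewrite <- Aa, Hx1. reflexivity. }
    pose proof (cs x (a' v1)). pose proof (hnorm_nonneg v1). pose proof (hnorm_nonneg x). pose proof (hnorm_nonneg (a' v1)).
    rewrite <- hnorm_sq in E. destruct (Req_dec (hnorm v1) 0). nra.
    assert (hnorm v1 <= hnorm x * hnorm (a' v1) / hnorm v1).
    { apply Rmult_le_reg_r with (r := hnorm v1). lra. field_simplify; nra. }
    apply Rle_trans with (hnorm x * hnorm (a' v1) / hnorm v1); auto.
    apply Rmult_le_reg_r with (r := hnorm v1). lra. field_simplify; [|lra]. nra. }
  set (m := Rmin (/ (ca * ca)) (/ (cb * cb))).
  assert (Pm : 0 < m) by (apply Rmin_glb_lt; apply Rinv_0_lt_compat; nra).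
  exists (2 / m). split. apply Rdiv_lt_0_compat; lra.
  intros v Hv.
  assert (Sa : subsp (imS a)) by (apply im_subsp; auto).
  assert (Sk : subsp (kerS b)) by (apply ker_subsp; auto).
  assert (Ck : closedS (kerS b)) by (apply ker_closed; auto).
  set (w := Pr (kerS b) v). set (v3 := hsub v w).
  set (v1 := Pr (imS a) w). set (v2 := hsub w v1).
  assert (Hw : kerS b w) by (apply Pr_in; auto).
  assert (Hv3 : orth v3 (kerS b)) by (apply Pr_orth; auto).
  assert (Hv1 : imS a v1) by (apply Pr_in; auto).
  assert (Hv2 : orth v2 (imS a)) by (apply Pr_orth; auto).
  assert (K1 : kerS b v1). { destruct Hv1 as [x <-]. apply Hba. }
  assert (K2 : kerS b v2) by (apply subsp_sub; auto).
  assert (A2 : a' v2 = hzero) by (apply (orth_im_iff a a' Aa); auto).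
  assert (D2 : kerS Dl v2) by (apply Dl_ker'; auto).
  assert (Z2 : v2 = hzero).
  { apply nsq_0. assert (Ev : v = hadd (hadd v1 v2) v3) by (unfold v3, v2; veq_tac).
    pose proof (C0_rinner _ _ (Hv v2 D2)). rewrite Ev in H. rewrite !rinner_addl in H.
    pose proof (C0_rinner _ _ (hinner_C0_sym _ _ (Hv2 v1 Hv1))).
    pose proof (C0_rinner _ _ (Hv3 v2 K2)). rewrite nsq_rinner. lra. }
  assert (Ev : v = hadd v1 v3) by (unfold v3; replace w with (hadd v1 v2) by (unfold v2; veq_tac); rewrite Z2; veq_tac).
  assert (A3 : a' v3 = hzero).
  { apply (orth_im_iff a a' Aa). intros s [x <-]. apply Hv3. apply Hba. }
  assert (Eav : a' v = a' v1) by (rewrite Ev, (bl_add a' Ha'), A3, hadd_0r; reflexivity).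
  assert (Ebv : b v = b v3) by (rewrite Ev, (bl_add b Hb), K1, hadd_0; reflexivity).
  pose proof (Ba v1 Hv1) as B1. pose proof (Bb v3 Hv3) as B3.
  pose proof (Dl_rinner v) as DR. rewrite Eav, Ebv in DR.
  pose proof (cs (Dl v) v) as CS.
  assert (Q1 : m * nsq v1 <= nsq (a' v1)).
  { rewrite <- !hnorm_sq. pose proof (hnorm_nonneg v1). pose proof (hnorm_nonneg (a' v1)).
    assert (m <= / (ca * ca)) by apply Rmin_l.
    apply Rle_trans with (/ (ca * ca) * (hnorm v1 * hnorm v1)). apply Rmult_le_compat_r; nra.
    apply Rmult_le_reg_l with (r := ca * ca). nra. field_simplify; [|nra]. nra. }
  assert (Q3 : m * nsq v3 <= nsq (b v3)).
  { rewrite <- !hnorm_sq. pose proof (hnorm_nonneg v3). pose proof (hnorm_nonneg (b v3)).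
    assert (m <= / (cb * cb)) by apply Rmin_r.
    apply Rle_trans with (/ (cb * cb) * (hnorm v3 * hnorm v3)). apply Rmult_le_compat_r; nra.
    apply Rmult_le_reg_l with (r := cb * cb). nra. field_simplify; [|nra]. nra. }
  assert (Q : nsq v <= 2 * nsq v1 + 2 * nsq v3).
  { rewrite Ev, nsq_add. pose proof (nsq_nonneg (hsub v1 v3)). rewrite nsq_sub in H. lra. }
  pose proof (hnorm_nonneg v). pose proof (hnorm_nonneg (Dl v)).
  assert (m * nsq v <= m * (2 * nsq v1 + 2 * nsq v3)) by (apply Rmult_le_compat_l; lra).
  assert (m * (hnorm v * hnorm v) <= 2 * (hnorm (Dl v) * hnorm v)) by (rewrite hnorm_sq; lra).
  destruct (Req_dec (hnorm v) 0) as [Z0|Z0]. rewrite Z0. apply Rmult_le_pos; [left; apply Rdiv_lt_0_compat; lra | lra].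
  apply Rmult_le_reg_l with (r := m * hnorm v). nra.
  replace (m * hnorm v * (2 / m * hnorm (Dl v))) with (2 * (hnorm (Dl v) * hnorm v)) by (field; lra). nra.
Qed.

Lemma Dl_closed : closedS (imS Dl).
Proof.
  destruct Dl_below as [c [Pc Bc]].
  pose proof Dl_bl as HD.
  assert (SK : subsp (kerS Dl)) by (apply ker_subsp; auto).
  assert (CK : closedS (kerS Dl)) by (apply ker_closed; auto).
  intros u l Hu Cu. apply fchoice in Hu. destruct Hu as [x Hx].
  set (x' := fun k => hsub (x k) (Pr (kerS Dl) (x k))).
  assert (Dx' : forall k, Dl (x' k) = u k).
  { intro k. unfold x'. rewrite (bl_sub Dl HD). rewrite (Pr_in (kerS Dl) SK CK (x k)), hsub_0r. auto. }
  assert (Ox' : forall k, orth (x' k) (kerS Dl)) by (intro; apply Pr_orth; auto).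
  assert (Hcau : cauchy x').
  { intros e He. destruct (Cu (e / (2 * c))) as [N HN]. apply Rdiv_lt_0_compat; lra.
    exists N. intros m k Hm Hk. specialize (HN m Hm) as H1. specialize (HN k Hk) as H2.
    unfold hdist in H1, H2. fold (hsub (u m) l) in H1. fold (hsub (u k) l) in H2.
    pose proof (Bc (hsub (x' m) (x' k)) (orth_sub _ _ _ (Ox' m) (Ox' k))).
    rewrite (bl_sub Dl HD), !Dx' in H.
    pose proof (hsub_tri (u m) l (u k)). rewrite (hnorm_sub_sym l (u k)) in H0.
    apply Rle_lt_trans with (c * hnorm (hsub (u m) (u k))); auto.
    apply Rlt_le_trans with (c * (e / (2 * c) + e / (2 * c))). apply Rmult_lt_compat_l; lra.
    right; field; lra. }
  destruct (cauchy_conv _ Hcau) as [xl Hxl]. exists xl.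
  apply (conv_unique (fun k => Dl (x' k))). apply (bl_conv Dl HD); auto.
  replace (fun k => Dl (x' k)) with u; auto. apply functional_extensionality; intro; symmetry; auto.
Qed.

Lemma Dl_decomp y : exists x r, y = hadd (Dl x) r /\ Dl r = hzero.
Proof.
  pose proof Dl_bl as HD.
  assert (SI : subsp (imS Dl)) by (apply im_subsp; auto).
  destruct (Pr_in (imS Dl) SI Dl_closed y) as [x Hx].
  exists x, (hsub y (Pr (imS Dl) y)). split. rewrite Hx. veq_tac.
  apply (orth_im_iff Dl Dl Dl_adj). apply Pr_orth; auto. apply Dl_closed.
Qed.

End Lap.

Import Defs.
Import ListNotations.
Open Scope R_scope.

Fixpoint cadd (cs ds : list C) : list C :=
  match cs, ds with
  | c :: cs', d :: ds' => Cadd c d :: cadd cs' ds'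
  | [], _ => ds
  | _, [] => cs
  end.

Section Span.
Context {X : Hilbert}.

Lemma lincomb_nil_l (ws : list X) : lincomb [] ws = hzero.
Proof. destruct ws; reflexivity. Qed.

Lemma lincomb_nil_r (cs : list C) : lincomb cs (@nil X) = hzero.
Proof. destruct cs; reflexivity. Qed.

Lemma lincomb_cadd (cs ds : list C) (ws : list X) :
  lincomb (cadd cs ds) ws = hadd (lincomb cs ws) (lincomb ds ws).
Proof.
  revert cs ds. induction ws as [|w ws IH]; intros cs ds.
  - destruct cs, ds; simpl; rewrite ?hadd_0; reflexivity.
  - destruct cs as [|c cs], ds as [|d ds]; simpl; rewrite ?hadd_0, ?hadd_0r; try reflexivity.
    rewrite IH, hscal_addl. veq_tac.
Qed.

Lemma lincomb_scal a (cs : list C) (ws : list X) :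
  lincomb (map (Cmul a) cs) ws = hscal a (lincomb cs ws).
Proof.
  revert cs. induction ws as [|w ws IH]; intros cs.
  - destruct cs; simpl; rewrite hscal_0r; reflexivity.
  - destruct cs as [|c cs]; simpl. rewrite hscal_0r; reflexivity.
    rewrite IH, hscal_addr, hscal_assoc. reflexivity.
Qed.

Lemma lincomb_in (S : X -> Prop) (cs : list C) ws : subsp S -> (forall w, In w ws -> S w) -> S (lincomb cs ws).
Proof.
  intros HS. revert cs. induction ws as [|w ws IH]; intros cs Hw.
  - destruct cs; simpl; apply (subsp0 S HS).
  - destruct cs as [|c cs]; simpl. apply (subsp0 S HS).
    apply subsp_add; auto. apply subsp_scal; auto. apply Hw; left; auto.
    apply IH. intros; apply Hw; right; auto.
Qed.

Definition spanS (ws : list X) : X -> Prop := fun v => exists cs, v = lincomb cs ws.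

Lemma span_subsp ws : subsp (spanS ws).
Proof.
  split; [|split].
  - exists []. rewrite lincomb_nil_l. reflexivity.
  - intros x y [cs ->] [ds ->]. exists (cadd cs ds). rewrite lincomb_cadd. reflexivity.
  - intros a x [cs ->]. exists (map (Cmul a) cs). rewrite lincomb_scal. reflexivity.
Qed.
End Span.

Lemma lincomb_map {X Y : Hilbert} (f : X -> Y) (Hf : bounded_linear f) (cs : list C) (ws : list X) :
  f (lincomb cs ws) = lincomb cs (map f ws).
Proof.
  revert cs. induction ws as [|w ws IH]; intros cs.
  - destruct cs; simpl; apply (bl_zero f Hf).
  - destruct cs as [|c cs]; simpl. apply (bl_zero f Hf).
    rewrite (bl_add f Hf), (bl_scal f Hf), IH. reflexivity.
Qed.

Lemma subsp_inter {X : Hilbert} (S1 S2 : X -> Prop) : subsp S1 -> subsp S2 -> subsp (fun v => S1 v /\ S2 v).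
Proof.
  intros H1 H2. split; [|split].
  - split; apply subsp0; auto.
  - intros x y [] []; split; apply subsp_add; auto.
  - intros a x []; split; apply subsp_scal; auto.
Qed.

Lemma closed_inter {X : Hilbert} (S1 S2 : X -> Prop) : closedS S1 -> closedS S2 -> closedS (fun v => S1 v /\ S2 v).
Proof.
  intros H1 H2 u l Hu Cu. split. apply (H1 u); auto. intro m; apply Hu. apply (H2 u); auto. intro m; apply Hu.
Qed.

Section FC.
Context {X Y : Hilbert}.

Lemma fc_closed_n (n : nat) : forall (ws : list Y) (T : X -> Y) (Z : Y -> Prop), length ws = n -> bounded_linear T -> subsp Z -> closedS Z ->
  (forall x, Z (T x)) -> (forall w, In w ws -> Z w) ->
  (forall z, Z z -> exists x cs, z = hadd (T x) (lincomb cs ws)) -> closedS (imS T).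
Proof.
  induction n as [|n IH]; intros ws T Z Hlen HT SZ CZ HTZ Hws Hcov.
  - destruct ws; [|discriminate]. intros u l Hu Cu. assert (Z l). { apply (CZ u); auto. intro m. destruct (Hu m) as [x <-]. auto. }
    destruct (Hcov l H) as [x [cs E]]. exists x. rewrite E, lincomb_nil_r, hadd_0r. reflexivity.
  - destruct ws as [|w ws]; [discriminate|]. simpl in Hlen. injection Hlen as Hlen.
    destruct (classic (exists x cs, w = hadd (T x) (lincomb cs ws))) as [[x0 [d0 Ew]]|NB].
    +
      apply (IH ws T Z); auto. intros; apply Hws; right; auto.
      intros z Hz. destruct (Hcov z Hz) as [x [cs Ez]]. destruct cs as [|c cs].
      * exists x, []. rewrite Ez. reflexivity.
      * exists (hadd x (hscal c x0)), (cadd (map (Cmul c) d0) cs). rewrite Ez. simpl. rewrite Ew.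
        rewrite lincomb_cadd, lincomb_scal, (bl_add T HT), (bl_scal T HT). veq_tac.
    +
      assert (Hw0 : w <> hzero). { intro E. apply NB. exists hzero, []. rewrite (bl_zero T HT), lincomb_nil_l, hadd_0. auto. }
      assert (Pw : 0 < hnorm w). { pose proof (hnorm_nonneg w). destruct (Req_dec (hnorm w) 0). apply hnorm_0 in H0; contradiction. lra. }
      set (e := hscal (RC (/ hnorm w)) w).
      assert (Ee : hinner e e = C1).
      { apply Ceq. change (nsq e = 1). unfold e. rewrite nsq_scal, <- hnorm_sq. field. lra.
        simpl. apply hinner_pos. }
      assert (Ze : Z e) by (apply subsp_scal; auto; apply Hws; left; auto).
      set (O := orthc (fun s => s = e)).
      assert (SO : subsp O) by apply orthc_subsp. assert (CO : closedS O) by apply orthc_closed.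
      set (P := Pr O).
      assert (HPf : forall y, P y = hsub y (hscal (hinner y e) e)).
      { intro y. apply Pr_char; auto.
        - intros s ->. unfold hsub. rewrite hinner_add, hinner_oppl, hinner_scal, Ee. apply Ceq; simpl; ring.
        - replace (hsub y (hsub y (hscal (hinner y e) e))) with (hscal (hinner y e) e) by veq_tac.
          intros s Hs. rewrite hinner_scal. unfold O, orthc, orth in Hs. rewrite (hinner_C0_sym _ _ (Hs e eq_refl)).
          apply Ceq; simpl; ring. }
      assert (HP : bounded_linear P) by (apply Pr_bl; auto).
      assert (PZ : forall y, Z y -> Z (P y)) by (intros; rewrite HPf; apply subsp_sub; auto; apply subsp_scal; auto).
      assert (PO : forall y, O (P y)) by (intro; apply Pr_in; auto).
      set (T' := ocomp P T).
      assert (HT' : bounded_linear T') by (apply bl_comp; auto).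
      assert (Cl' : closedS (imS T')).
      { apply (IH (map P ws) T' (fun v => Z v /\ O v)); auto.
        - rewrite length_map; auto.
        - apply subsp_inter; auto.
        - apply closed_inter; auto.
        - intro x. split. apply PZ; auto. apply PO.
        - intros v Hv. apply in_map_iff in Hv. destruct Hv as [y [<- Hy]]. split. apply PZ; apply Hws; right; auto. apply PO.
        - intros z [Hz Oz]. destruct (Hcov z Hz) as [x [cs Ez]].
          assert (Pzz : P z = z). { apply Pr_id; auto. }
          assert (Hwe : hinner w e = RC (hnorm w)).
          { unfold e. rewrite hinner_scalr. destruct (hinner_pos w) as [H0 _].
            apply Ceq; unfold RC; simpl; change (Cre (hinner w w)) with (nsq w); rewrite H0, <- (hnorm_sq w); field; lra. }
          assert (Pw' : P w = hzero).
          { rewrite HPf, Hwe. unfold e. rewrite hscal_assoc.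
            replace (Cmul (RC (hnorm w)) (RC (/ hnorm w))) with C1 by (apply Ceq; unfold RC, C1; simpl; field; lra).
            rewrite hscal_1. apply hsub_diag. }
          destruct cs as [|c cs].
          * exists x, []. rewrite <- Pzz, Ez. simpl. rewrite !hadd_0r. reflexivity.
          * exists x, cs. rewrite <- Pzz, Ez. simpl. rewrite (bl_add P HP), (bl_add P HP), (bl_scal P HP), Pw', hscal_0r, hadd_0.
            rewrite (lincomb_map P HP). reflexivity. }
      intros u l Hu Cu.
      assert (Zl : Z l). { apply (CZ u); auto. intro m. destruct (Hu m) as [x <-]. auto. }
      apply fchoice in Hu. destruct Hu as [xs Hxs].
      assert (IP : imS T' (P l)).
      { apply (Cl' (fun m => P (u m))). intro m. exists (xs m). unfold T', ocomp. rewrite Hxs. auto.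
        apply (bl_conv P HP); auto. }
      destruct IP as [x0 Hx0].
      destruct (open_mapping T' HT' Cl') as [Cc [HCc HOM]].
      assert (Hch : forall m, exists x', T' x' = T' (hsub (xs m) x0) /\ hnorm x' <= Cc * hnorm (T' (hsub (xs m) x0))).
      { intro m. apply HOM. eexists; eauto. }
      apply fchoice in Hch. destruct Hch as [xp Hxp].
      assert (Ct : forall m, T (hsub (hsub (xs m) x0) (xp m)) = hzero).
      { intro m. set (t := T (hsub (hsub (xs m) x0) (xp m))).
        assert (Pt : P t = hzero). { unfold t. change (T' (hsub (hsub (xs m) x0) (xp m)) = hzero).
          rewrite (bl_sub T' HT'), (proj1 (Hxp m)). apply hsub_diag. }
        rewrite HPf in Pt. apply hsub_eq0 in Pt.
        destruct (classic (hinner t e = C0)) as [E0|E0].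
        - rewrite Pt, E0. apply hscal_0l.
        - exfalso. apply NB. set (c := hinner t e) in *.
          assert (Hc : Cre c * Cre c + Cim c * Cim c <> 0).
          { intro. apply E0. apply Ceq; simpl; nra. }
          set (ci := mkC (Cre c / (Cre c * Cre c + Cim c * Cim c)) (- Cim c / (Cre c * Cre c + Cim c * Cim c))).
          exists (hscal (Cmul (RC (hnorm w)) ci) (hsub (hsub (xs m) x0) (xp m))), [].
          rewrite lincomb_nil_l, hadd_0r, (bl_scal T HT). fold t. rewrite Pt, hscal_assoc.
          unfold e. rewrite hscal_assoc. transitivity (hscal C1 w). symmetry; apply hscal_1. f_equal.
          apply Ceq; unfold ci, RC, C1; simpl; field; repeat split; try lra; auto. }
      assert (Eu : forall m, u m = hadd (T x0) (T (xp m))).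
      { intro m. pose proof (Ct m). rewrite !(bl_sub T HT), Hxs in H. apply hsub_eq0 in H.
        apply hsub_eq0. rewrite <- H. veq_tac. }
      assert (Cxp : converges xp hzero).
      { apply (conv_bound _ _ (fun m => Cc * hnorm (hsub (P (u m)) (P l)))).
        intro m. rewrite hsub_0r. destruct (Hxp m) as [_ B]. unfold T', ocomp in B. rewrite (bl_sub T HT), (bl_sub P HP), Hxs in B.
        unfold T', ocomp in Hx0. rewrite Hx0 in B. exact B.
        intros e' He'. destruct ((bl_conv P HP u l Cu) (e' / Cc)) as [N HN]. apply Rdiv_lt_0_compat; lra.
        exists N. intros n1 Hn1. specialize (HN n1 Hn1). unfold hdist in HN. fold (hsub (P (u n1)) (P l)) in HN.
        unfold R_dist. rewrite Rminus_0_r. rewrite Rabs_right.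
        apply Rmult_lt_compat_l with (r := Cc) in HN; auto. replace (Cc * (e' / Cc)) with e' in HN by (field; lra). exact HN.
        apply Rle_ge, Rmult_le_pos; [lra|apply hnorm_nonneg]. }
      exists x0. apply (conv_unique u); auto.
      replace u with (fun m => hadd (T x0) (T (xp m))) by (apply functional_extensionality; intro; symmetry; auto).
      assert (Cv : converges (fun m => hadd (T x0) (T (xp m))) (hadd (T x0) hzero)).
      { apply conv_add. apply conv_const. rewrite <- (bl_zero T HT). apply (bl_conv T HT); auto. }
      rewrite hadd_0r in Cv. exact Cv.
Qed.
Lemma fc_closed (ws : list Y) (T : X -> Y) (Z : Y -> Prop) : bounded_linear T -> subsp Z -> closedS Z ->
  (forall x, Z (T x)) -> (forall w, In w ws -> Z w) ->
  (forall z, Z z -> exists x cs, z = hadd (T x) (lincomb cs ws)) -> closedS (imS T).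
Proof. apply (fc_closed_n (length ws)); auto. Qed.
End FC.

Import Defs.
Import ListNotations.
Open Scope R_scope.

Lemma conv_cauchy {X : Hilbert} (u : nat -> X) l : converges u l -> cauchy u.
Proof.
  intros Cu e He. destruct (Cu (e/2)) as [N HN]; [lra|]. exists N. intros m k Hm Hk.
  pose proof (HN m Hm). pose proof (HN k Hk). unfold hdist in *.
  fold (hsub (u m) l) in H. fold (hsub (u k) l) in H0.
  pose proof (hsub_tri (u m) l (u k)). rewrite (hnorm_sub_sym l (u k)) in H1. lra.
Qed.

Lemma sinc_ge (phi : nat -> nat) : (forall m, (phi m < phi (S m))%nat) -> forall m, (m <= phi m)%nat.
Proof. intros H m. induction m. lia. specialize (H m). lia. Qed.

Lemma sinc_mono (phi : nat -> nat) : (forall m, (phi m < phi (S m))%nat) -> forall a b, (a < b)%nat -> (phi a < phi b)%nat.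
Proof. intros H a b Hab. induction Hab. apply H. specialize (H m). lia. Qed.

Section ON.
Context {X : Hilbert}.
Variable SS : X -> Prop.
Hypothesis HS : subsp SS.

Fixpoint ONl (L : list X) : Prop :=
  match L with
  | [] => True
  | x :: L' => ONl L' /\ SS x /\ hinner x x = C1 /\ forall y, In y L' -> hinner x y = C0
  end.

Definition Qp (L : list X) (v : X) : X := lincomb (map (fun e => hinner v e) L) L.

Lemma Qp_inner L v : ONl L -> forall y, In y L -> hinner (Qp L v) y = hinner v y.
Proof.
  induction L as [|x L IH]; intros HL y Hy. destruct Hy.
  destruct HL as [HL [Sx [Hxx Hxo]]]. unfold Qp in *. simpl. rewrite hinner_add, hinner_scal.
  destruct Hy as [<-|Hy].
  - rewrite Hxx. assert (hinner (lincomb (map (fun e => hinner v e) L) L) x = C0).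
    { clear IH. assert (forall y, In y L -> hinner y x = C0) by (intros; apply hinner_C0_sym; auto).
      revert H HL. clear Hxo. generalize (map (fun e => hinner v e) L) as cs. induction L as [|z L IH2]; intros cs H HL.
      - destruct cs; apply hinner_0l.
      - destruct cs as [|c cs]. apply hinner_0l. simpl. rewrite hinner_add, hinner_scal, H by (left; auto).
        rewrite IH2; auto. apply Ceq; simpl; ring. intros; apply H; right; auto. apply HL. }
    rewrite H. apply Ceq; unfold C1; simpl; ring.
  - rewrite IH; auto. rewrite Hxo; auto. apply Ceq; simpl; ring.
Qed.

Lemma Qp_in L v : ONl L -> SS (Qp L v).
Proof.
  intro HL. unfold Qp. apply lincomb_in; auto. induction L as [|x L IH]; intros w Hw. destruct Hw.
  destruct HL as [HL [Sx _]]. destruct Hw as [<-|Hw]; auto.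
Qed.

Lemma on_step L : ONl L -> (exists v, SS v /\ ~ spanS L v) -> exists e, ONl (e :: L).
Proof.
  intros HL [v [Sv Nv]]. set (r := hsub v (Qp L v)).
  assert (Sr : SS r) by (apply subsp_sub; auto; apply Qp_in; auto).
  assert (Or : forall y, In y L -> hinner r y = C0).
  { intros y Hy. unfold r, hsub. rewrite hinner_add, hinner_oppl, Qp_inner; auto. apply Ceq; simpl; ring. }
  assert (Pr0 : 0 < hnorm r).
  { pose proof (hnorm_nonneg r). destruct (Req_dec (hnorm r) 0); [|lra]. exfalso. apply Nv.
    apply hnorm_0 in H0. apply hsub_eq0 in H0. rewrite H0. eexists. reflexivity. }
  exists (hscal (RC (/ hnorm r)) r). simpl. split; auto. split. apply subsp_scal; auto. split.
  - apply Ceq. change (nsq (hscal (RC (/ hnorm r)) r) = 1). rewrite nsq_scal, <- hnorm_sq. field. lra.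
    simpl. apply hinner_pos.
  - intros y Hy. rewrite hinner_scal, Or; auto. apply Ceq; simpl; ring.
Qed.

Lemma finite_or_on : (exists vs, forall v, SS v -> spanS vs v) \/
  (exists e : nat -> X, (forall n, SS (e n)) /\ (forall n, hinner (e n) (e n) = C1) /\
     (forall n m, n <> m -> hinner (e n) (e m) = C0)).
Proof.
  destruct (classic (exists vs, forall v, SS v -> spanS vs v)) as [H|H]; [left; auto|right].
  assert (G : forall L : list X, exists e, ONl L -> ONl (e :: L)).
  { intro L. destruct (classic (ONl L)) as [HL|HL].
    - destruct (on_step L HL) as [e He]. apply NNPP. intro. apply H. exists L. intros v Sv. apply NNPP. intro. apply H0. exists v. auto.
      exists e. auto.
    - exists hzero. intro; contradiction. }
  apply fchoice in G. destruct G as [g Hg].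
  set (lst := fix lst (n : nat) : list X := match n with O => [] | Datatypes.S n => g (lst n) :: lst n end).
  assert (ONn : forall n, ONl (lst n)). { induction n. simpl; auto. simpl. apply Hg. auto. }
  assert (Hin : forall n m, (m < n)%nat -> In (g (lst m)) (lst n)).
  { intros n m Hmn. induction Hmn. simpl; auto. simpl. right; auto. }
  exists (fun n => g (lst n)). split; [|split].
  - intro n. destruct (ONn (Datatypes.S n)) as [_ [A _]]. auto.
  - intro n. destruct (ONn (Datatypes.S n)) as [_ [_ [A _]]]. auto.
  - assert (Hlt : forall n m, (m < n)%nat -> hinner (g (lst n)) (g (lst m)) = C0).
    { intros n m Hmn. destruct (ONn (Datatypes.S n)) as [_ [_ [_ A]]]. apply A. apply Hin; auto. }
    intros n m Hnm. destruct (Nat.lt_total n m) as [Hl|[He|Hgt]].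
    apply hinner_C0_sym. apply Hlt; lia. contradiction. apply Hlt; lia.
Qed.
End ON.

Lemma on_dist {X : Hilbert} (e : nat -> X) n m : hinner (e n) (e n) = C1 -> hinner (e m) (e m) = C1 ->
  hinner (e n) (e m) = C0 -> hnorm (hsub (e n) (e m)) = sqrt 2.
Proof.
  intros A B Cc. rewrite hnorm_nsq, nsq_sub. unfold nsq, rinner. rewrite A, B, Cc. simpl. f_equal. ring.
Qed.

Lemma sqrt2_gt1 : 1 < sqrt 2.
Proof. rewrite <- sqrt_1. apply sqrt_lt_1; lra. Qed.

Lemma on_unit {X : Hilbert} (e : X) : hinner e e = C1 -> hnorm e = 1.
Proof. intro A. rewrite hnorm_nsq. unfold nsq. rewrite A. simpl. apply sqrt_1. Qed.

Section Riesz.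
Context {X : Hilbert}.
Variable Z : X -> Prop.
Hypotheses (SZ : subsp Z) (CZ : closedS Z).
Variable K : X -> X.
Hypothesis HK : compact_op K.
Hypothesis KZ : forall z, Z z -> Z (K z).

Definition Fk : X -> X := fun z => hadd z (K z).

Lemma Kbl : bounded_linear K. Proof. apply HK. Qed.
Lemma Fk_bl : bounded_linear Fk.
Proof. apply (bl_oadd oid K). apply bl_id. apply Kbl. Qed.

Definition Nk : X -> Prop := fun z => Z z /\ Fk z = hzero.
Lemma Nk_subsp : subsp Nk. Proof. apply subsp_inter; auto. apply ker_subsp. apply Fk_bl. Qed.
Lemma Nk_closed : closedS Nk. Proof. apply closed_inter; auto. apply ker_closed. apply Fk_bl. Qed.

Lemma on_compact_contra (e : nat -> X) : (forall n, hinner (e n) (e n) = C1) ->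
  (forall n m, n <> m -> hinner (e n) (e m) = C0) -> (forall n, K (e n) = hopp (e n)) -> False.
Proof.
  intros E1 E2 E3. destruct HK as [_ HC]. destruct (HC e) as [phi [Hphi [l Hl]]].
  { exists 1. intro m. rewrite on_unit; auto. lra. }
  assert (Cn : converges (fun m => hopp (K (e (phi m)))) (hopp l)).
  { rewrite hopp_scal. replace (fun m => hopp (K (e (phi m)))) with (fun m => hscal (RC (-1)) (K (e (phi m)))).
    apply conv_scal; auto. apply functional_extensionality; intro; symmetry; apply hopp_scal. }
  apply conv_cauchy in Cn. destruct (Cn 1) as [N HN]. lra.
  specialize (HN N (S N) (le_n _) (le_S _ _ (le_n _))). rewrite !E3, !hopp_opp in HN.
  rewrite on_dist in HN; auto. pose proof sqrt2_gt1. lra. specialize (Hphi N). apply E2. lia.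
Qed.

Lemma Nk_finite : exists vs, forall v, Nk v -> spanS vs v.
Proof.
  destruct (finite_or_on Nk Nk_subsp) as [H|[e [A [B Cc]]]]; auto. exfalso.
  apply (on_compact_contra e B Cc). intro n. destruct (A n) as [_ F]. unfold Fk in F.
  apply (hadd_cancel_l (e n)). rewrite F, hadd_opp. reflexivity.
Qed.

Lemma Fk_below : exists c, 0 < c /\ forall z, Z z -> orth z Nk -> hnorm z <= c * hnorm (Fk z).
Proof.
  apply NNPP. intro Hn.
  assert (H : forall n : nat, exists z, Z z /\ orth z Nk /\ hnorm z = 1 /\ hnorm (Fk z) < / (INR n + 1)).
  { intro n. apply NNPP. intro Hn2. apply Hn. exists (INR n + 1). split. pose proof (pos_INR n); lra.
    intros z Zz Oz. apply Rnot_lt_le. intro Hlt. apply Hn2.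
    assert (Pz : 0 < hnorm z). { pose proof (hnorm_nonneg z). pose proof (hnorm_nonneg (Fk z)). pose proof (pos_INR n). nra. }
    exists (hscal (RC (/ hnorm z)) z). split. apply subsp_scal; auto. split. apply orth_scal; auto.
    rewrite (bl_scal Fk Fk_bl), !hnorm_scal, Rabs_right. split. field; lra.
    apply Rmult_lt_reg_l with (r := hnorm z); auto. rewrite <- Rmult_assoc, Rinv_r by lra.
    apply Rmult_lt_reg_l with (r := INR n + 1). pose proof (pos_INR n); lra.
    replace ((INR n + 1) * (hnorm z * / (INR n + 1))) with (hnorm z) by (field; pose proof (pos_INR n); lra). lra.
    apply Rle_ge. left. apply Rinv_0_lt_compat; auto. }
  apply fchoice in H. destruct H as [z Hz].
  destruct HK as [_ HC]. destruct (HC z) as [phi [Hphi [y Hy]]].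
  { exists 1. intro m. destruct (Hz m) as [_ [_ [-> _]]]. lra. }
  assert (CF : converges (fun m => Fk (z (phi m))) hzero).
  { apply (conv_bound _ _ (fun m => / (INR m + 1))). intro m. rewrite hsub_0r. destruct (Hz (phi m)) as [_ [_ [_ B]]].
    left. eapply Rlt_le_trans; [exact B|]. apply Rinv_le_contravar. pose proof (pos_INR m); lra.
    pose proof (le_INR _ _ (sinc_ge phi Hphi m)) as HH. lra.
    intros e He. destruct (inv_INR_small e He) as [N HN]. exists N. intros n Hn3. unfold R_dist. rewrite Rminus_0_r.
    rewrite Rabs_right. auto. apply Rle_ge. left. apply Rinv_0_lt_compat. pose proof (pos_INR n); lra. }
  assert (Cz : converges (fun m => z (phi m)) (hsub hzero y)).
  { replace (fun m => z (phi m)) with (fun m => hsub (Fk (z (phi m))) (K (z (phi m)))).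
    apply conv_sub; auto. apply functional_extensionality. intro m. unfold Fk. veq_tac. }
  set (w := hsub hzero y) in *.
  assert (Zw : Z w) by (apply (CZ _ _ (fun m => proj1 (Hz (phi m))) Cz)).
  assert (Ow : orth w Nk) by (apply (orthc_closed Nk _ _ (fun m => proj1 (proj2 (Hz (phi m)))) Cz)).
  assert (Fw : Fk w = hzero).
  { apply (conv_unique (fun m => Fk (z (phi m)))). apply (bl_conv Fk Fk_bl); auto. auto. }
  assert (Nw : w = hzero) by (apply (orth_self w Nk); auto; split; auto).
  assert (hnorm w = 1).
  { apply Rle_antisym. apply (conv_norm_le _ _ _ Cz). intro m. destruct (Hz (phi m)) as [_ [_ [-> _]]]. lra.
    apply Rnot_lt_le. intro Hlt. apply conv_norm in Cz. destruct (Cz (1 - hnorm w)) as [N HN]. lra.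
    specialize (HN N (le_n _)). destruct (Hz (phi N)) as [_ [_ [E _]]]. rewrite E in HN. unfold R_dist in HN.
    apply Rabs_def2 in HN. lra. }
  rewrite Nw, hnorm_zero in H. lra.
Qed.

Definition Mk : X -> Prop := fun v => exists z, Z z /\ Fk z = v.

Lemma Mk_subsp : subsp Mk.
Proof.
  split; [|split].
  - exists hzero. split. apply subsp0; auto. apply (bl_zero Fk Fk_bl).
  - intros a b [x [Zx <-]] [y [Zy <-]]. exists (hadd x y). split. apply subsp_add; auto. apply (bl_add Fk Fk_bl).
  - intros c a [x [Zx <-]]. exists (hscal c x). split. apply subsp_scal; auto. apply (bl_scal Fk Fk_bl).
Qed.

Lemma Mk_Z v : Mk v -> Z v.
Proof. intros [z [Zz <-]]. unfold Fk. apply subsp_add; auto. Qed.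

Lemma Mk_closed : closedS Mk.
Proof.
  destruct Fk_below as [c [Pc Bc]].
  intros u l Hu Cu. apply fchoice in Hu. destruct Hu as [x Hx].
  set (x' := fun k => hsub (x k) (Pr Nk (x k))).
  assert (Zx' : forall k, Z (x' k)).
  { intro k. apply subsp_sub; auto. apply Hx. apply (Pr_in Nk Nk_subsp Nk_closed). }
  assert (Dx' : forall k, Fk (x' k) = u k).
  { intro k. unfold x'. rewrite (bl_sub Fk Fk_bl). destruct (Pr_in Nk Nk_subsp Nk_closed (x k)) as [_ E]. rewrite E, hsub_0r. apply Hx. }
  assert (Ox' : forall k, orth (x' k) Nk) by (intro; apply Pr_orth; [apply Nk_subsp|apply Nk_closed]).
  assert (Hcau : cauchy x').
  { intros e He. destruct (Cu (e / (2 * c))) as [N HN]. apply Rdiv_lt_0_compat; lra.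
    exists N. intros m k Hm Hk. specialize (HN m Hm) as H1. specialize (HN k Hk) as H2.
    unfold hdist in H1, H2. fold (hsub (u m) l) in H1. fold (hsub (u k) l) in H2.
    pose proof (Bc (hsub (x' m) (x' k)) (subsp_sub _ SZ _ _ (Zx' m) (Zx' k)) (orth_sub _ _ _ (Ox' m) (Ox' k))).
    rewrite (bl_sub Fk Fk_bl), !Dx' in H.
    pose proof (hsub_tri (u m) l (u k)). rewrite (hnorm_sub_sym l (u k)) in H0.
    apply Rle_lt_trans with (c * hnorm (hsub (u m) (u k))); auto.
    apply Rlt_le_trans with (c * (e / (2 * c) + e / (2 * c))). apply Rmult_lt_compat_l; lra.
    right; field; lra. }
  destruct (cauchy_conv _ Hcau) as [xl Hxl]. exists xl. split. apply (CZ x'); auto.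
  apply (conv_unique (fun k => Fk (x' k))). apply (bl_conv Fk Fk_bl); auto.
  replace (fun k => Fk (x' k)) with u; auto. apply functional_extensionality; intro; symmetry; auto.
Qed.

Definition Wk : X -> Prop := fun v => Z v /\ orth v Mk.

Lemma Wk_finite : exists vs, forall v, Wk v -> spanS vs v.
Proof.
  assert (SW : subsp Wk) by (apply subsp_inter; auto; apply orthc_subsp).
  destruct (finite_or_on Wk SW) as [H|[f [A [B Cc]]]]; auto. exfalso.
  assert (Hfk : forall n m, hinner (f m) (Fk (f n)) = C0).
  { intros n m. destruct (A m) as [_ O]. apply O. exists (f n). split; auto. apply A. }
  assert (Hfk2 : forall n m, rinner (f m) (K (f n)) = if Nat.eq_dec n m then -1 else 0).
  { intros n m. pose proof (C0_rinner _ _ (Hfk n m)). unfold Fk in H. rewrite rinner_addr in H.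
    destruct (Nat.eq_dec n m) as [->|Ne]. unfold rinner in *. rewrite B in H. simpl in H. lra.
    unfold rinner in *. rewrite Cc in H; auto. simpl in H. lra. }
  destruct HK as [_ HC]. destruct (HC f) as [phi [Hphi [y Hy]]].
  { exists 1. intro m. rewrite on_unit; auto. lra. }
  assert (Hinj : forall a b, a <> b -> phi a <> phi b).
  { intros a b Hab. destruct (Nat.lt_total a b) as [Hl|[He|Hgt]].
    pose proof (sinc_mono phi Hphi a b Hl); lia. contradiction. pose proof (sinc_mono phi Hphi b a Hgt); lia. }
  assert (Hy0 : forall k, rinner (f (phi k)) y = 0).
  { intro k. pose proof (conv_rinner _ _ (f (phi k)) Hy) as CR.
    rewrite rinner_sym. apply (Un_cv_unique' _ _ _ CR). intros e He. exists (S k). intros n Hn. unfold R_dist.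
    rewrite rinner_sym, Hfk2. destruct (Nat.eq_dec (phi n) (phi k)). exfalso. apply (Hinj n k); auto; lia.
    rewrite Rminus_0_r, Rabs_R0. auto. }
  destruct (Hy 1) as [N HN]. lra. specialize (HN N (le_n _)). unfold hdist in HN. fold (hsub (K (f (phi N))) y) in HN.
  pose proof (cs_abs (f (phi N)) (hsub (K (f (phi N))) y)). rewrite rinner_subr, Hy0, Hfk2 in H.
  destruct (Nat.eq_dec (phi N) (phi N)); [|congruence]. rewrite on_unit in H; auto.
  assert (Rabs (-1 - 0) = 1) by (unfold Rabs; destruct Rcase_abs; lra). lra.
Qed.

Theorem compact_fred : exists vs, forall u, Z u -> exists cs z, Z z /\ u = hadd (lincomb cs vs) (Fk z).
Proof.
  destruct Wk_finite as [vs Hvs]. exists vs. intros u Zu.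
  destruct (Pr_in Mk Mk_subsp Mk_closed u) as [z [Zz Ez]].
  assert (Wk (hsub u (Pr Mk u))).
  { split. apply subsp_sub; auto. apply Mk_Z. apply Pr_in. apply Mk_subsp. apply Mk_closed.
    apply Pr_orth. apply Mk_subsp. apply Mk_closed. }
  destruct (Hvs _ H) as [cs Ecs]. exists cs, z. split; auto. rewrite <- Ecs, Ez. veq_tac.
Qed.
End Riesz.

Import Defs.
Import ListNotations.
Open Scope R_scope.

Lemma adj_unique {X Y : Hilbert} (f : X -> Y) f1 f2 : is_adjoint f f1 -> is_adjoint f f2 -> f1 = f2.
Proof.
  intros A1 A2. apply functional_extensionality. intro y. apply veq. intro z.
  rewrite (hinner_conj z (f1 y)), (hinner_conj z (f2 y)), <- A1, <- A2. reflexivity.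
Qed.

Lemma osub_oscal {X Y : Hilbert} (F G : X -> Y) : osub F G = oadd F (oscal (RC (-1)) G).
Proof. apply functional_extensionality. intro. unfold osub, oadd, oscal. rewrite hopp_scal. reflexivity. Qed.

Section Alg.
Variable O : ClGOA.

Lemma L0_sub {g0 g1 : gw O} (F G : H O g0 -> H O g1) : L0 O F -> L0 O G -> L0 O (osub F G).
Proof. intros. rewrite osub_oscal. apply L0_add; auto. apply L0_scal; auto. Qed.

Lemma Linf_sub {g0 g1 : gw O} (F G : H O g0 -> H O g1) : Linf O F -> Linf O G -> Linf O (osub F G).
Proof. intros. rewrite osub_oscal. apply Linf_add; auto. apply Linf_scal; auto. Qed.

Definition eqv {g0 g1 : gw O} (F G : H O g0 -> H O g1) := Linf O (osub F G).

Lemma eqv_refl {g0 g1 : gw O} (F : H O g0 -> H O g1) : eqv F F.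
Proof.
  unfold eqv. replace (osub F F) with (@ozero (H O g0) (H O g1)). apply Linf_zero.
  apply functional_extensionality; intro. unfold osub, ozero. symmetry; apply hadd_opp.
Qed.

Lemma eqv_eq {g0 g1 : gw O} (F G : H O g0 -> H O g1) : F = G -> eqv F G.
Proof. intros ->. apply eqv_refl. Qed.

Lemma eqv_trans {g0 g1 : gw O} (F G K : H O g0 -> H O g1) : eqv F G -> eqv G K -> eqv F K.
Proof.
  unfold eqv. intros. replace (osub F K) with (oadd (osub F G) (osub G K)). apply Linf_add; auto.
  apply functional_extensionality; intro. unfold osub, oadd. veq_tac.
Qed.

Lemma eqv_sym {g0 g1 : gw O} (F G : H O g0 -> H O g1) : eqv F G -> eqv G F.
Proof.
  unfold eqv. intros. replace (osub G F) with (oscal (RC (-1)) (osub F G)). apply Linf_scal; auto.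
  apply functional_extensionality; intro. unfold osub, oscal. veq_tac.
Qed.

Lemma eqv_add {g0 g1 : gw O} (F1 F2 G1 G2 : H O g0 -> H O g1) : eqv F1 F2 -> eqv G1 G2 -> eqv (oadd F1 G1) (oadd F2 G2).
Proof.
  unfold eqv. intros. replace (osub (oadd F1 G1) (oadd F2 G2)) with (oadd (osub F1 F2) (osub G1 G2)). apply Linf_add; auto.
  apply functional_extensionality; intro. unfold osub, oadd. veq_tac.
Qed.

Lemma eqv_comp_l {g0 g1 g2 : gw O} (F1 F2 : H O g0 -> H O g1) (B : H O g1 -> H O g2) :
  L0 O B -> eqv F1 F2 -> eqv (ocomp B F1) (ocomp B F2).
Proof.
  unfold eqv. intros HB E. replace (osub (ocomp B F1) (ocomp B F2)) with (ocomp B (osub F1 F2)).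
  apply Linf_comp_l; auto. apply functional_extensionality; intro. unfold osub, ocomp.
  rewrite (bl_add B (L0_bl _ _ _ _ HB)), (bl_opp B (L0_bl _ _ _ _ HB)). reflexivity.
Qed.

Lemma eqv_comp_r {g0 g1 g2 : gw O} (F1 F2 : H O g1 -> H O g2) (C' : H O g0 -> H O g1) :
  L0 O C' -> eqv F1 F2 -> eqv (ocomp F1 C') (ocomp F2 C').
Proof. unfold eqv. intros HC E. apply (Linf_comp_r _ _ _ _ C' (osub F1 F2)); auto. Qed.

Lemma eqv_Linf {g0 g1 : gw O} (F G : H O g0 -> H O g1) : Linf O G -> eqv F (oadd F G).
Proof.
  unfold eqv. intros. replace (osub F (oadd F G)) with (oscal (RC (-1)) G). apply Linf_scal; auto.
  apply functional_extensionality; intro. unfold osub, oadd, oscal. veq_tac.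
Qed.

Lemma L0_blo {g0 g1 : gw O} (F : H O g0 -> H O g1) : L0 O F -> bounded_linear F.
Proof. apply L0_bl. Qed.

Lemma adj_is {g0 g1 : gw O} (F : H O g0 -> H O g1) : L0 O F -> is_adjoint F (adj O F).
Proof. apply adj_spec. Qed.

Lemma adj_bl {g0 g1 : gw O} (F : H O g0 -> H O g1) : L0 O F -> bounded_linear (adj O F).
Proof. intro. apply L0_bl. apply L0_adj; auto. Qed.

Lemma sigma_zero l {g0 g1 : gw O} x : (l < nsym O)%nat -> sigma O l (@ozero (H O g0) (H O g1)) x = ozero.
Proof. intro. apply sigma_smooth; auto. apply Linf_zero. Qed.

End Alg.

Import Defs.
Import ListNotations.
Open Scope R_scope.

Section Cx.
Variable O : ClGOA.
Variable g : Z -> gw O.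
Variable A : forall j : Z, H O (g j) -> H O (g (Z.succ j)).
Hypothesis HA : forall j, L0 O (A j).
Hypothesis Hcx : is_complex O g A.

Notation tr := (trH O g).

Lemma tr_inv1 i k (e : i = k) v : tr e (tr (eq_sym e) v) = v.
Proof. destruct e. reflexivity. Qed.
Lemma tr_inv2 i k (e : i = k) v : tr (eq_sym e) (tr e v) = v.
Proof. destruct e. reflexivity. Qed.

Lemma L0_trl i k (e : i = k) g0 (F : H O g0 -> H O (g i)) : L0 O F -> L0 O (fun v => tr e (F v)).
Proof. destruct e. auto. Qed.

Lemma L0_tr i k (e : i = k) : L0 O (tr e).
Proof. apply (L0_trl i k e _ oid). apply L0_id. Qed.

Lemma tr_adj i k (e : i = k) u w : hinner (tr e u) w = hinner u (tr (eq_sym e) w).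
Proof. destruct e. reflexivity. Qed.

Lemma tr_conj (F : forall k, H O (g k) -> H O (g k)) p j (e : Z.succ p = j) v :
  tr e (F (Z.succ p) (tr (eq_sym e) v)) = F j v.
Proof. destruct e. reflexivity. Qed.

Definition tau p : H O (g p) -> H O (g (Z.pred (Z.succ p))) := tr (eq_sym (Z.pred_succ p)).
Definition taui p : H O (g (Z.pred (Z.succ p))) -> H O (g p) := tr (Z.pred_succ p).

Lemma Aprev_succ_gen p q (e1 : q = p) (e2 : Z.succ q = Z.succ p) v :
  tr e2 (A q (tr (eq_sym e1) v)) = A p v.
Proof.
  destruct e1. rewrite (UIP_dec Z.eq_dec e2 eq_refl). reflexivity.
Qed.

Lemma Aprev_succ p v : Aprev O g A (Z.succ p) (tau p v) = A p v.
Proof. unfold Aprev, tau. apply Aprev_succ_gen. Qed.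

Lemma Aprev_succ_fun p : Aprev O g A (Z.succ p) = ocomp (A p) (taui p).
Proof.
  apply functional_extensionality. intro w. unfold ocomp. rewrite <- Aprev_succ. unfold tau, taui.
  rewrite tr_inv2. reflexivity.
Qed.

Lemma A_fun p : A p = ocomp (Aprev O g A (Z.succ p)) (tau p).
Proof. apply functional_extensionality. intro w. unfold ocomp. rewrite Aprev_succ. reflexivity. Qed.

Lemma cx_succ p v : A (Z.succ p) (A p v) = hzero.
Proof. rewrite <- (Aprev_succ p v). apply Hcx. Qed.

Lemma cx_fun j : ocomp (A j) (Aprev O g A j) = ozero.
Proof. apply functional_extensionality. intro. apply Hcx. Qed.

Lemma L0_Aprev j : L0 O (Aprev O g A j).
Proof. unfold Aprev. apply L0_trl. apply HA. Qed.

Lemma adj_Aprev_succ p : adj O (Aprev O g A (Z.succ p)) = ocomp (tau p) (adj O (A p)).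
Proof.
  apply adj_unique with (f := Aprev O g A (Z.succ p)). apply adj_spec. apply L0_Aprev.
  intros x y. rewrite Aprev_succ_fun. unfold ocomp, taui, tau. rewrite (adj_spec _ _ _ _ (HA p)).
  apply tr_adj.
Qed.

Lemma AA_succ p : ocomp (Aprev O g A (Z.succ p)) (adj O (Aprev O g A (Z.succ p))) = ocomp (A p) (adj O (A p)).
Proof.
  rewrite adj_Aprev_succ, Aprev_succ_fun. apply functional_extensionality. intro. unfold ocomp, tau, taui.
  rewrite tr_inv1. reflexivity.
Qed.

Lemma Lap_succ p : Laplacian O g A (Z.succ p) = oadd (ocomp (A p) (adj O (A p))) (ocomp (adj O (A (Z.succ p))) (A (Z.succ p))).
Proof. unfold Laplacian. rewrite AA_succ. reflexivity. Qed.

Lemma L0_Lap j : L0 O (Laplacian O g A j).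
Proof.
  unfold Laplacian. apply L0_add; apply L0_comp; auto; try apply L0_adj; auto; apply L0_Aprev.
Qed.

Lemma Lap_adj j : is_adjoint (Laplacian O g A j) (Laplacian O g A j).
Proof.
  apply (Dl_adj (Aprev O g A j) (adj O (Aprev O g A j)) (A j) (adj O (A j))); apply adj_spec; auto. apply L0_Aprev.
Qed.

Lemma sig_Aprev_succ_im l (Hl : (l < nsym O)%nat) x p v :
  (exists w, sigma O l (Aprev O g A (Z.succ p)) x w = v) <-> (exists w, sigma O l (A p) x w = v).
Proof.
  split; intros [w <-].
  - rewrite Aprev_succ_fun, sigma_comp; auto. unfold ocomp. eexists; reflexivity. apply L0_tr.
  - rewrite A_fun, sigma_comp; auto. unfold ocomp. eexists; reflexivity. apply L0_tr. apply L0_Aprev.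
Qed.

Lemma sig_Lap l (Hl : (l < nsym O)%nat) x j :
  sigma O l (Laplacian O g A j) x =
  Dl (sigma O l (Aprev O g A j) x) (sigma O l (adj O (Aprev O g A j)) x) (sigma O l (A j) x) (sigma O l (adj O (A j)) x).
Proof.
  pose proof (L0_Aprev j) as La. unfold Laplacian, Dl.
  rewrite sigma_add; auto. rewrite !sigma_comp; auto. apply L0_adj; auto. apply L0_adj; auto.
  apply L0_comp; auto. apply L0_adj; auto. apply L0_comp; auto. apply L0_adj; auto.
Qed.

Lemma sig_cx l (Hl : (l < nsym O)%nat) x j w : sigma O l (A j) x (sigma O l (Aprev O g A j) x w) = hzero.
Proof.
  change (ocomp (sigma O l (A j) x) (sigma O l (Aprev O g A j) x) w = hzero).
  rewrite <- sigma_comp; auto. rewrite cx_fun, sigma_zero; auto. apply L0_Aprev.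
Qed.

End Cx.

Import Defs.
Import ListNotations.
Open Scope R_scope.

Lemma closed_ext {X : Hilbert} (P Q : X -> Prop) : (forall y, P y <-> Q y) -> closedS Q -> closedS P.
Proof. intros E C u l Hu Cu. apply E. apply (C u); auto. intro; apply E; auto. Qed.

Section Main.
Variable O : ClGOA.
Variable g : Z -> gw O.
Variable A : forall j : Z, H O (g j) -> H O (g (Z.succ j)).
Hypothesis HA : forall j, L0 O (A j).
Hypothesis Hcx : is_complex O g A.

Lemma ell_to_lap : elliptic_complex O g A -> forall j, elliptic_op O (Laplacian O g A j).
Proof.
  intros EC j l Hl x. rewrite (sig_Lap O g A HA); auto.
  pose proof (L0_Aprev O g A HA j) as LAp.
  set (a := sigma O l (Aprev O g A j) x). set (a' := sigma O l (adj O (Aprev O g A j)) x).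
  set (b := sigma O l (A j) x). set (b' := sigma O l (adj O (A j)) x).
  assert (Ha : bounded_linear a) by (apply sigma_bl; auto).
  assert (Ha' : bounded_linear a') by (apply sigma_bl; auto; apply L0_adj; auto).
  assert (Hb : bounded_linear b) by (apply sigma_bl; auto).
  assert (Hb' : bounded_linear b') by (apply sigma_bl; auto; apply L0_adj; auto).
  assert (Aa : is_adjoint a a') by (apply sigma_adj; auto).
  assert (Ab : is_adjoint b b') by (apply sigma_adj; auto).
  assert (Hba : forall w, b (a w) = hzero) by (intro; apply (sig_cx O g A HA Hcx); auto).
  assert (Ea : forall v, imS a v <-> kerS b v). { intro v. unfold imS, kerS. symmetry. apply EC; auto. }
  assert (Cla : closedS (imS a)) by (apply (closed_ext _ _ Ea); apply ker_closed; auto).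
  assert (Clb : closedS (imS b)).
  { apply (closed_ext _ (kerS (sigma O l (A (Z.succ j)) x))). intro v. unfold imS, kerS.
    rewrite (EC l Hl x (Z.succ j) v). unfold b. symmetry. apply (sig_Aprev_succ_im O g A HA); auto.
    apply ker_closed. apply sigma_bl; auto. }
  assert (Inj : forall u, Dl a a' b b' u = hzero -> u = hzero).
  { intros u Du. destruct (Dl_ker a a' b b' Aa Ab u Du) as [A1 B1].
    apply (orth_self u (imS a)). apply (orth_im_iff a a' Aa); auto. apply Ea. exact B1. }
  pose proof (Dl_bl a a' b b' Ha Ha' Hb Hb') as HD.
  split.
  - intros u v E. apply hsub_eq0. apply Inj. rewrite (bl_sub _ HD), E. apply hsub_diag.
  - intro w. destruct (Dl_decomp a a' b b' Ha Ha' Hb Hb' Aa Ab Hba Cla Clb w) as [u [r [Ew Dr]]].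
    exists u. rewrite Ew, (Inj r Dr), hadd_0r. reflexivity.
Qed.

Lemma lap_to_ell : (forall j, elliptic_op O (Laplacian O g A j)) -> elliptic_complex O g A.
Proof.
  intros EL l Hl x j v.
  pose proof (L0_Aprev O g A HA j) as LAp.
  set (a := sigma O l (Aprev O g A j) x). set (a' := sigma O l (adj O (Aprev O g A j)) x).
  set (b := sigma O l (A j) x). set (b' := sigma O l (adj O (A j)) x).
  assert (Hb : bounded_linear b) by (apply sigma_bl; auto).
  assert (Ab : is_adjoint b b') by (apply sigma_adj; auto).
  assert (Hba : forall w, b (a w) = hzero) by (intro; apply (sig_cx O g A HA Hcx); auto).
  split.
  - intro Bv. destruct (EL j l Hl x) as [_ Sur]. destruct (Sur v) as [w Ew].
    rewrite (sig_Lap O g A HA) in Ew; auto. fold a a' b b' in Ew. unfold Dl, oadd, ocomp in Ew.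
    assert (E2 : b (b' (b w)) = hzero).
    { rewrite <- Ew in Bv. rewrite (bl_add b Hb), Hba, hadd_0 in Bv. exact Bv. }
    assert (E3 : b' (b w) = hzero).
    { apply nsq_0. unfold nsq. rewrite <- Ab, E2. rewrite hinner_0l. reflexivity. }
    exists (a' w). rewrite <- Ew, E3. fold a. rewrite hadd_0r. reflexivity.
  - intros [w <-]. apply Hba.
Qed.

End Main.

Section Param.
Variable O : ClGOA.
Variable g : Z -> gw O.
Variable A : forall j : Z, H O (g j) -> H O (g (Z.succ j)).
Hypothesis HA : forall j, L0 O (A j).
Hypothesis Hcx : is_complex O g A.

Definition lap_param (G : forall j, H O (g j) -> H O (g j)) :=
  forall j, L0 O (G j) /\ eqv O (ocomp (G j) (Laplacian O g A j)) oid /\ eqv O (ocomp (Laplacian O g A j) (G j)) oid.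

Definition Bof (G : forall j, H O (g j) -> H O (g j)) : forall j, H O (g (Z.succ j)) -> H O (g j) :=
  fun j => ocomp (adj O (A j)) (G (Z.succ j)).

Lemma Lap_intertw j : ocomp (A j) (Laplacian O g A j) = ocomp (Laplacian O g A (Z.succ j)) (A j).
Proof.
  rewrite (Lap_succ O g A HA j). apply functional_extensionality. intro v. unfold Laplacian. unfold ocomp, oadd.
  rewrite (bl_add _ (L0_bl _ _ _ _ (HA j))), Hcx, hadd_0.
  rewrite (cx_succ O g A Hcx), (bl_zero _ (adj_bl O _ (HA (Z.succ j)))), hadd_0r. reflexivity.
Qed.

Lemma AB_fun (G : forall j, H O (g j) -> H O (g j)) j :
  ocomp (Aprev O g A j) (Bnext O g (Bof G) j) = ocomp (Aprev O g A j) (ocomp (adj O (Aprev O g A j)) (G j)).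
Proof.
  apply functional_extensionality. intro v.
  set (F := fun k (w : H O (g k)) => Aprev O g A k (adj O (Aprev O g A k) (G k w))).
  change (trH O g (Z.succ_pred j) (A (Z.pred j) (adj O (A (Z.pred j)) (G (Z.succ (Z.pred j)) (trH O g (eq_sym (Z.succ_pred j)) v))))
     = F j v).
  assert (Hs : forall w, A (Z.pred j) (adj O (A (Z.pred j)) (G (Z.succ (Z.pred j)) w)) = F (Z.succ (Z.pred j)) w).
  { intro w. unfold F. change (ocomp (A (Z.pred j)) (adj O (A (Z.pred j))) (G (Z.succ (Z.pred j)) w) =
      ocomp (Aprev O g A (Z.succ (Z.pred j))) (adj O (Aprev O g A (Z.succ (Z.pred j)))) (G (Z.succ (Z.pred j)) w)).
    rewrite (AA_succ O g A HA). reflexivity. }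
  rewrite Hs. apply (tr_conj O g F).
Qed.

Lemma lap_param_cx G : lap_param G -> cx_parametrix O g A (Bof G).
Proof.
  intros HG j. destruct (HG j) as [LG [E1 E2]]. destruct (HG (Z.succ j)) as [LG' [E1' E2']].
  pose proof (L0_Aprev O g A HA j) as LAp.
  assert (LAd : L0 O (adj O (A j))) by (apply L0_adj; auto).
  split. apply L0_comp; auto.
  change (eqv O (oadd (ocomp (Aprev O g A j) (Bnext O g (Bof G) j)) (ocomp (Bof G j) (A j))) oid).
  rewrite AB_fun.
  assert (S1 : eqv O (ocomp (G (Z.succ j)) (A j)) (ocomp (A j) (G j))).
  { apply eqv_trans with (ocomp (G (Z.succ j)) (ocomp (A j) (ocomp (Laplacian O g A j) (G j)))).
    - apply eqv_sym. change (eqv O (ocomp (ocomp (G (Z.succ j)) (A j)) (ocomp (Laplacian O g A j) (G j)))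
         (ocomp (ocomp (G (Z.succ j)) (A j)) oid)). apply eqv_comp_l; auto. apply L0_comp; auto.
    - change (eqv O (ocomp (ocomp (G (Z.succ j)) (ocomp (A j) (Laplacian O g A j))) (G j)) (ocomp (A j) (G j))).
      rewrite Lap_intertw.
      change (eqv O (ocomp (ocomp (G (Z.succ j)) (Laplacian O g A (Z.succ j))) (ocomp (A j) (G j))) (ocomp oid (ocomp (A j) (G j)))).
      apply eqv_comp_r; auto. apply L0_comp; auto. }
  apply eqv_trans with (oadd (ocomp (Aprev O g A j) (ocomp (adj O (Aprev O g A j)) (G j))) (ocomp (adj O (A j)) (ocomp (A j) (G j)))).
  - apply eqv_add. apply eqv_refl. change (eqv O (ocomp (adj O (A j)) (ocomp (G (Z.succ j)) (A j))) (ocomp (adj O (A j)) (ocomp (A j) (G j)))).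
    apply eqv_comp_l; auto.
  - change (eqv O (ocomp (Laplacian O g A j) (G j)) oid). exact E2.
Qed.

Lemma cx_to_fred B : cx_parametrix O g A B -> fredholm_complex O g A.
Proof.
  intros HB j. destruct (HB j) as [LB Hinf].
  destruct (HB (Z.pred j)) as [LBp _].
  set (K := osub (oadd (ocomp (Aprev O g A j) (Bnext O g B j)) (ocomp (B j) (A j))) oid).
  assert (HK : compact_op K) by (apply Linf_compact; auto).
  pose proof (L0_bl _ _ _ _ (HA j)) as BA.
  pose proof (L0_bl _ _ _ _ (L0_Aprev O g A HA j)) as BAp.
  pose proof (L0_bl _ _ _ _ LB) as BB.
  set (Zs := kerS (A j)).
  assert (SZ : subsp Zs) by (apply ker_subsp; auto).
  assert (CZ : closedS Zs) by (apply ker_closed; auto).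
  assert (KZ : forall z, Zs z -> Zs (K z)).
  { intros z Hz. unfold Zs, kerS in *. unfold K, osub, oadd, ocomp, oid.
    rewrite (bl_add _ BA), (bl_add _ BA), (bl_opp _ BA), Hz, Hcx, hopp_0, hadd_0, hadd_0r.
    rewrite (bl_zero _ BB), (bl_zero _ BA). reflexivity. }
  destruct (compact_fred Zs SZ CZ K HK KZ) as [vs Hvs]. exists vs.
  intros u Hu. destruct (Hvs u Hu) as [cs [z [Zz Ez]]]. exists cs, (Bnext O g B j z).
  rewrite Ez. f_equal. unfold Fk, K, osub, oadd, ocomp, oid. unfold Zs, kerS in Zz. rewrite Zz, (bl_zero _ BB). veq_tac.
Qed.

End Param.

Lemma dchoice {I : Type} {T : I -> Type} (P : forall i, T i -> Prop) :
  (forall i, exists t, P i t) -> exists f : forall i, T i, forall i, P i (f i).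
Proof.
  intro Hh. exists (fun i => proj1_sig (constructive_indefinite_description _ (Hh i))).
  intro i. exact (proj2_sig (constructive_indefinite_description _ (Hh i))).
Qed.

Lemma adj_comp_zero {X Y Z : Hilbert} (F : X -> Y) (F' : Y -> X) (G : Y -> Z) (G' : Z -> Y) :
  is_adjoint F F' -> is_adjoint G G' -> bounded_linear G -> (forall x, G (F x) = hzero) -> forall z, F' (G' z) = hzero.
Proof.
  intros AF AG BG HGF z. apply nsq_0. unfold nsq. rewrite <- AF, <- AG, HGF, hinner_0l. reflexivity.
Qed.

Section Fred.
Variable O : ClGOA.
Variable g : Z -> gw O.
Variable A : forall j : Z, H O (g j) -> H O (g (Z.succ j)).
Hypothesis HA : forall j, L0 O (A j).
Hypothesis Hcx : is_complex O g A.

Lemma proj_cover {X Y : Hilbert} (T : X -> Y) (Zs : Y -> Prop) (vs : list Y) :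
  subsp Zs -> closedS Zs -> (forall x, Zs (T x)) ->
  (forall u, Zs u -> exists cs w, u = hadd (lincomb cs vs) (T w)) ->
  (forall u, Zs u -> exists x cs, u = hadd (T x) (lincomb cs (map (Pr Zs) vs))).
Proof.
  intros SZ CZ TZ Hc u Hu. destruct (Hc u Hu) as [cs [w Ew]]. exists w, cs.
  rewrite <- (Pr_id Zs SZ CZ u Hu), Ew, (Pr_add Zs SZ CZ), (Pr_id Zs SZ CZ (T w)) by auto.
  rewrite (lincomb_map _ (Pr_bl Zs SZ CZ)). apply hadd_comm.
Qed.

Lemma fc_to_lapfred : fredholm_complex O g A -> forall j, fredholm_op (Laplacian O g A j).
Proof.
  intros FC j.
  pose proof (L0_Aprev O g A HA j) as LAp.
  set (a := Aprev O g A j). set (a' := adj O a). set (b := A j). set (b' := adj O b).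
  assert (Ha : bounded_linear a) by (apply L0_bl; auto).
  assert (Ha' : bounded_linear a') by (apply adj_bl; auto).
  assert (Hb : bounded_linear b) by (apply L0_bl; auto).
  assert (Hb' : bounded_linear b') by (apply adj_bl; auto).
  assert (Aa : is_adjoint a a') by (apply adj_spec; auto).
  assert (Ab : is_adjoint b b') by (apply adj_spec; auto).
  assert (Hba : forall w, b (a w) = hzero) by apply Hcx.
  destruct (FC j) as [vs Hvs].
  assert (Cla : closedS (imS a)).
  { apply (fc_closed (map (Pr (kerS b)) vs) a (kerS b) Ha (ker_subsp b Hb) (ker_closed b Hb)); auto.
    intros w Hw. apply in_map_iff in Hw. destruct Hw as [v [<- _]]. apply Pr_in. apply ker_subsp; auto. apply ker_closed; auto.
    apply proj_cover; auto. apply ker_subsp; auto. apply ker_closed; auto. }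
  assert (Clb : closedS (imS b)).
  { destruct (FC (Z.succ j)) as [ws Hws].
    set (c := A (Z.succ j)). assert (Hc : bounded_linear c) by (apply L0_bl; auto).
    apply (fc_closed (map (Pr (kerS c)) ws) b (kerS c) Hb (ker_subsp c Hc) (ker_closed c Hc)); auto.
    intro x. apply (cx_succ O g A Hcx).
    intros w Hw. apply in_map_iff in Hw. destruct Hw as [v [<- _]]. apply Pr_in. apply ker_subsp; auto. apply ker_closed; auto.
    apply proj_cover; auto. apply ker_subsp; auto. apply ker_closed; auto. intro x. apply (cx_succ O g A Hcx).
    intros u Hu. destruct (Hws u Hu) as [cs [w Ew]]. exists cs, (taui O g j w). rewrite Ew.
    rewrite (Aprev_succ_fun O g A). reflexivity. }
  set (Q := Pr (orthc (imS a))).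
  assert (SQ : subsp (orthc (imS a))) by apply orthc_subsp. assert (CQ : closedS (orthc (imS a))) by apply orthc_closed.
  assert (Hker : forall k, Laplacian O g A j k = hzero -> exists cs, k = lincomb cs (map Q vs)).
  { intros k Dk. destruct (Dl_ker a a' b b' Aa Ab k Dk) as [K1 K2].
    destruct (Hvs k K2) as [cs [w Ew]]. exists cs.
    rewrite <- (Pr_id _ SQ CQ k). rewrite Ew. unfold Q. rewrite (Pr_add _ SQ CQ).
    rewrite (Pr_orth_zero _ SQ CQ (Aprev O g A j w)), hadd_0r. apply (lincomb_map _ (Pr_bl _ SQ CQ)).
    intros s Hs. apply hinner_C0_sym. apply Hs. exists w; auto.
    apply (orth_im_iff a a' Aa). auto. }
  split; [|split].
  - apply L0_bl. apply L0_Lap; auto.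
  - exists (map Q vs). auto.
  - exists (map Q vs). intro y. destruct (Dl_decomp a a' b b' Ha Ha' Hb Hb' Aa Ab Hba Cla Clb y) as [x [r [Ey Dr]]].
    destruct (Hker r Dr) as [cs Ecs]. exists x, cs. rewrite Ey, Ecs. reflexivity.
Qed.

Lemma lap_param_exists : (forall j, elliptic_op O (Laplacian O g A j)) -> exists G, lap_param O g A G.
Proof.
  intro EL.
  assert (Ch : forall j, exists B : H O (g j) -> H O (g j), L0 O B /\ eqv O (ocomp B (Laplacian O g A j)) oid /\ eqv O (ocomp (Laplacian O g A j) B) oid).
  { intro j. destruct (proj1 (sigma_elliptic O _ _ _ (L0_Lap O g A HA j)) (EL j)) as [B [LB [E1 E2]]].
    exists B. split; auto. }
  apply (dchoice (T := fun j => H O (g j) -> H O (g j))) in Ch. exact Ch.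
Qed.

Lemma ext_param : ext_fredholm_property O -> elliptic_complex O g A ->
  exists B, cx_parametrix O g A B /\ forall j v, B j (B (Z.succ j) v) = hzero.
Proof.
  intros [FP EXT] EC.
  pose proof (ell_to_lap O g A HA Hcx EC) as EL.
  assert (Ch : forall j, exists GP : (H O (g j) -> H O (g j)) * (H O (g j) -> H O (g j)),
     L0 O (fst GP) /\ orth_proj_ker O (Laplacian O g A j) (snd GP) /\
     ocomp (fst GP) (Laplacian O g A j) = osub oid (snd GP) /\ ocomp (Laplacian O g A j) (fst GP) = osub oid (snd GP)).
  { intro j. pose proof (L0_Lap O g A HA j) as LD.
    assert (FD : fredholm_op (Laplacian O g A j)).
    { apply FP; auto. apply (sigma_elliptic O _ _ _ LD). apply EL. }
    destruct (EXT _ _ LD (Lap_adj O g A HA j) FD) as [G [P [LG [HP [E1 E2]]]]]. exists (G, P). simpl. auto. }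
  apply (dchoice (T := fun j => ((H O (g j) -> H O (g j)) * (H O (g j) -> H O (g j)))%type)) in Ch.
  destruct Ch as [GP HGP].
  set (G := fun j => fst (GP j)). set (P := fun j => snd (GP j)).
  assert (LP : forall j, L0 O (P j)).
  { intro j. destruct (HGP j) as [LG [_ [E1 _]]].
    replace (P j) with (osub oid (ocomp (G j) (Laplacian O g A j))). apply L0_sub; auto. apply L0_id.
    apply L0_comp; auto. apply L0_Lap; auto.
    apply functional_extensionality. intro v. unfold G, P. rewrite E1. unfold osub, oid. veq_tac. }
  assert (DP : forall j v, Laplacian O g A j (P j v) = hzero). { intros j v. destruct (HGP j) as [_ [HP _]]. apply HP. }
  assert (PLinf : forall j, Linf O (P j)).
  { intro j. destruct (proj1 (sigma_elliptic O _ _ _ (L0_Lap O g A HA j)) (EL j)) as [B0 [LB0 [K1 _]]].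
    pose proof (Linf_comp_r _ _ _ _ (P j) _ (LP j) K1) as K2.
    replace (P j) with (oscal (RC (-1)) (ocomp (osub (ocomp B0 (Laplacian O g A j)) oid) (P j))).
    apply Linf_scal; auto.
    apply functional_extensionality. intro v. unfold oscal, ocomp, osub, oid. rewrite DP, (bl_zero _ (L0_bl _ _ _ _ LB0)).
    veq_tac. }
  assert (LPG : lap_param O g A G).
  { intro j. destruct (HGP j) as [LG [_ [E1 E2]]]. split; auto. unfold eqv. fold (G j) (P j) in E1, E2. rewrite E1, E2.
    replace (osub (osub oid (P j)) oid) with (oscal (RC (-1)) (P j)).
    split; apply Linf_scal; auto.
    apply functional_extensionality. intro v. unfold oscal, osub, oid. veq_tac. }
  exists (Bof O g A G). split. apply lap_param_cx; auto.
  assert (Comm : forall q y, G q (adj O (A q) y) = adj O (A q) (G (Z.succ q) y)).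
  { intros q y.
    set (b := A q). set (b' := adj O b). set (c := A (Z.succ q)). set (c' := adj O c).
    assert (Hb' : bounded_linear b') by (apply adj_bl; auto).
    assert (Ab : is_adjoint b b') by (apply adj_spec; auto).
    assert (Ac : is_adjoint c c') by (apply adj_spec; auto).
    pose proof (L0_Aprev O g A HA q) as LAp.
    assert (Aap : is_adjoint (Aprev O g A q) (adj O (Aprev O g A q))) by (apply adj_spec; auto).
    assert (Z1 : forall z, adj O (Aprev O g A q) (b' z) = hzero).
    { apply (adj_comp_zero (Aprev O g A q) _ b b'); auto. all: try (apply L0_bl; auto); try apply Hcx. }
    assert (Z2 : forall z, b' (c' z) = hzero).
    { apply (adj_comp_zero b _ c c'); auto. all: try (apply L0_bl; auto); try (intro; apply (cx_succ O g A Hcx)). }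
    assert (Int : forall z, Laplacian O g A q (b' z) = b' (Laplacian O g A (Z.succ q) z)).
    { intro z. rewrite (Lap_succ O g A HA q). unfold Laplacian, oadd, ocomp.
      rewrite Z1, (bl_zero _ (L0_bl _ _ _ _ LAp)), hadd_0. fold b b' c c'.
      rewrite (bl_add _ Hb'), Z2, hadd_0r. reflexivity. }
    assert (P1 : forall z, b' (P (Z.succ q) z) = hzero).
    { intro z. pose proof (DP (Z.succ q) z) as D. rewrite (Lap_succ O g A HA q) in D.
      destruct (Dl_ker b b' c c' Ab Ac _ D) as [D1 _]. exact D1. }
    assert (P2 : forall z, P q (b' z) = hzero).
    { intro z. destruct (HGP q) as [_ [HP _]]. destruct (HP (b' z)) as [Pk Po]. fold (P q) in Pk, Po.
      apply (orth_self _ (kerS (Laplacian O g A q))); [|exact Pk].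
      assert (Ob : orth (b' z) (kerS (Laplacian O g A q))).
      { intros k Hk. destruct (Dl_ker (Aprev O g A q) (adj O (Aprev O g A q)) b b' Aap Ab k Hk) as [_ Bk].
        apply hinner_C0_sym. rewrite <- Ab. fold b in Bk. rewrite Bk. apply hinner_0l. }
      replace (P q (b' z)) with (hsub (b' z) (hsub (b' z) (P q (b' z)))) by veq_tac.
      apply orth_sub; [exact Ob | intros s Hs; apply Po; exact Hs]. }
    destruct (HGP q) as [LGq [_ [E1q _]]]. destruct (HGP (Z.succ q)) as [_ [_ [_ E2q]]].
    fold (G q) in E1q. fold (G (Z.succ q)) in E2q.
    pose proof (equal_f E2q y) as F2. unfold ocomp, osub, oid in F2.
    pose proof (equal_f E1q (b' (G (Z.succ q) y))) as F1. unfold ocomp, osub, oid in F1.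
    rewrite Int, F2 in F1. change (hadd y (hopp (snd (GP (Z.succ q)) y))) with (hsub y (P (Z.succ q) y)) in F1.
    rewrite (bl_sub _ Hb'), P1, hsub_0r in F1. change (snd (GP q)) with (P q) in F1. rewrite P2, hopp_0, hadd_0r in F1. exact F1. }
  intros j v. unfold Bof, ocomp. rewrite Comm.
  apply (adj_comp_zero (A j) _ (A (Z.succ j)) (adj O (A (Z.succ j)))).
  apply adj_spec; auto. apply adj_spec; auto.
  apply L0_bl; auto. intro; apply (cx_succ O g A Hcx).
Qed.

End Fred.

Import Defs.

Theorem mainTheorem11 (O : ClGOA) (g : Z -> gw O)
  (A : forall j : Z, H O (g j) -> H O (g (Z.succ j)))
  (HA : forall j, L0 O (A j))
  (Hcx : is_complex O g A) :
  (elliptic_complex O g A <-> forall j, elliptic_op O (Laplacian O g A j)) /\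
  (elliptic_complex O g A ->
     (exists B, cx_parametrix O g A B) /\ fredholm_complex O g A) /\
  (fredholm_property O ->
     (elliptic_complex O g A <-> exists B, cx_parametrix O g A B) /\
     (elliptic_complex O g A <-> fredholm_complex O g A)) /\
  (ext_fredholm_property O -> elliptic_complex O g A ->
     exists B, cx_parametrix O g A B /\
       forall j v, B j (B (Z.succ j) v) = hzero).
Proof.
  assert (EP : elliptic_complex O g A -> exists B, cx_parametrix O g A B).
  { intro EC. destruct (lap_param_exists O g A HA (ell_to_lap O g A HA Hcx EC)) as [G HG].
    exists (Bof O g A G). apply lap_param_cx; auto. }
  assert (FE : fredholm_property O -> fredholm_complex O g A -> elliptic_complex O g A).
  { intros FP FC. apply lap_to_ell; auto. intro j.
    pose proof (L0_Lap O g A HA j) as LD.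
    pose proof (proj2 (FP _ _ _ LD) (fc_to_lapfred O g A HA Hcx FC j)) as PP.
    exact (proj2 (sigma_elliptic O _ _ _ LD) PP). }
  split; [|split; [|split]].
  - split. apply ell_to_lap; auto. apply lap_to_ell; auto.
  - intro EC. destruct (EP EC) as [B HB]. split. exists B; auto. apply (cx_to_fred O g A HA Hcx B HB).
  - intro FP. split; split.
    + apply EP.
    + intros [B HB]. apply FE; auto. apply (cx_to_fred O g A HA Hcx B HB).
    + intro EC. destruct (EP EC) as [B HB]. apply (cx_to_fred O g A HA Hcx B HB).
    + apply FE; auto.
  - intros EXT EC. apply ext_param; auto.
Qed.
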